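(* For every integer $n\geq 2$, the operator $W_n^{*}$ on $H^2$ is frequently hypercyclic.
   Context: $H^2$ denotes the Hardy space of analytic functions $f(z)=\sum_{k\ge0}\hat f(k)z^k$ on the open unit disk with $\sum_{k}|\hat f(k)|^2<\infty$. For $n\in\mathbb{N}$, $W_n$ is the bounded operator on $H^2$ given by $W_nf(z)=(1+z+\cdots+z^{n-1})f(z^n)$, and $W_n^{*}$ is its adjoint. For $A\subseteq\mathbb{N}$, its lower density is $\liminf_{N\to\infty}\mathrm{card}(A\cap[1,N])/N$. An operator $T$ on a separable Banach space $Y$ is frequently hypercyclic if there is $y\in Y$ such that for every non-empty open $V\subseteq Y$, the set $\{k\in\mathbb{N}: T^ky\in V\}$ has positive lower density. *)

(* Defs.v *)
From Stdlib Require Import Reals ClassicalEpsilon.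
From Coquelicot Require Import Coquelicot.

(* H^2 is identified with the space of coefficient sequences
   f = (\hat f(k))_{k >= 0} with sum_k |\hat f(k)|^2 < oo. *)
Definition inH2 (f : nat -> C) : Prop :=
  ex_series (fun k => (Cmod (f k)) ^ 2).

Definition H2norm (f : nat -> C) : R :=
  sqrt (Series (fun k => (Cmod (f k)) ^ 2)).

Definition H2inner (f g : nat -> C) : C :=
  (Series (fun k => Re (Cmult (f k) (Cconj (g k)))),
   Series (fun k => Im (Cmult (f k) (Cconj (g k))))).

(* W_n f(z) = (1 + z + ... + z^{n-1}) f(z^n): the coefficient of z^m in
   W_n f is \hat f(m / n) (Euclidean quotient), since
   W_n f(z) = sum_k \hat f(k) (z^{nk} + ... + z^{nk+n-1}). *)
Definition W (n : nat) (f : nat -> C) : nat -> C :=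
  fun m => f (m / n)%nat.

Definition is_adjoint_W (n : nat) (T : (nat -> C) -> (nat -> C)) : Prop :=
  forall f g, inH2 f -> inH2 g ->
    inH2 (T g) /\ H2inner (W n f) g = H2inner f (T g).

Fixpoint count_upto (A : nat -> Prop) (N : nat) : nat :=
  match N with
  | O => O
  | S m => (count_upto A m +
            (if excluded_middle_informative (A (S m)) then 1 else 0))%nat
  end.

Definition lower_density (A : nat -> Prop) : Rbar :=
  LimInf_seq (fun N => INR (count_upto A N) / INR N).

Definition H2open (V : (nat -> C) -> Prop) : Prop :=
  forall x, V x -> inH2 x /\
    exists eps : R, 0 < eps /\
      forall y, inH2 y -> H2norm (fun k => Cminus (y k) (x k)) < eps -> V y.

Definition frequently_hypercyclic (T : (nat -> C) -> (nat -> C)) : Prop :=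
  exists y, inH2 y /\
    forall V, H2open V -> (exists x, V x) ->
      Rbar_lt (Finite 0) (lower_density (fun k => V (Nat.iter k T y))).

(* Main.v *)
Require Import Defs.
From Stdlib Require Import Reals.
From Coquelicot Require Import Coquelicot.
From Stdlib Require Import Lra Lia ZArith ClassicalEpsilon.
From Stdlib Require Cantor.

Fixpoint csum (f : nat -> C) (N : nat) : C :=
  match N with O => RtoC 0 | S m => Cplus (csum f m) (f m) end.
Fixpoint rsum (f : nat -> R) (N : nat) : R :=
  match N with O => 0%R | S m => (rsum f m + f m)%R end.

Lemma rsum_ext f g N : (forall i, (i < N)%nat -> f i = g i) -> rsum f N = rsum g N.
Proof. induction N; simpl; intros H; auto. rewrite IHN by (intros; apply H; lia). rewrite H by lia; auto. Qed.
Lemma csum_ext f g N : (forall i, (i < N)%nat -> f i = g i) -> csum f N = csum g N.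
Proof. induction N; simpl; intros H; auto. rewrite IHN by (intros; apply H; lia). rewrite H by lia; auto. Qed.

Lemma rsum_add f a b : rsum f (a + b) = (rsum f a + rsum (fun t => f (a + t)%nat) b)%R.
Proof. induction b; simpl. rewrite Nat.add_0_r; ring. rewrite Nat.add_succ_r; simpl. rewrite IHb; ring. Qed.
Lemma csum_add f a b : csum f (a + b) = Cplus (csum f a) (csum (fun t => f (a + t)%nat) b).
Proof. induction b; simpl. rewrite Nat.add_0_r. ring. rewrite Nat.add_succ_r; simpl. rewrite IHb; ring. Qed.

Lemma rsum_nonneg f N : (forall i, (i < N)%nat -> 0 <= f i) -> 0 <= rsum f N.
Proof. induction N; simpl; intros H. lra. assert (0 <= f N) by (apply H; lia). assert (0 <= rsum f N) by (apply IHN; intros; apply H; lia). lra. Qed.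
Lemma rsum_le f g N : (forall i, (i < N)%nat -> f i <= g i) -> rsum f N <= rsum g N.
Proof. induction N; simpl; intros H. lra. assert (f N <= g N) by (apply H; lia). assert (rsum f N <= rsum g N) by (apply IHN; intros; apply H; lia). lra. Qed.
Lemma rsum_mono f N M : (forall i, 0 <= f i) -> (N <= M)%nat -> rsum f N <= rsum f M.
Proof. intros H HNM. replace M with (N + (M - N))%nat by lia. rewrite rsum_add.
  assert (0 <= rsum (fun t => f (N + t)%nat) (M - N)) by (apply rsum_nonneg; auto). lra. Qed.
Lemma rsum_const c N : rsum (fun _ => c) N = (INR N * c)%R.
Proof. induction N; cbn [rsum]. simpl; ring. rewrite IHN, S_INR. ring. Qed.
Lemma csum_const c N : csum (fun _ => c) N = Cmult (RtoC (INR N)) c.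
Proof. induction N; cbn [csum]. unfold RtoC. apply injective_projections; simpl; ring.
  rewrite IHN, S_INR. unfold RtoC. apply injective_projections; simpl; ring. Qed.
Lemma rsum_plus f g N : rsum (fun i => f i + g i)%R N = (rsum f N + rsum g N)%R.
Proof. induction N; simpl. ring. rewrite IHN; ring. Qed.
Lemma rsum_scal c f N : rsum (fun i => c * f i)%R N = (c * rsum f N)%R.
Proof. induction N; simpl. ring. rewrite IHN; ring. Qed.
Lemma csum_plus f g N : csum (fun i => Cplus (f i) (g i)) N = Cplus (csum f N) (csum g N).
Proof. induction N; simpl. apply injective_projections; simpl; ring. rewrite IHN; ring. Qed.
Lemma csum_scal c f N : csum (fun i => Cmult c (f i)) N = Cmult c (csum f N).
Proof. induction N; simpl. apply injective_projections; simpl; ring. rewrite IHN; ring. Qed.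
Lemma csum_zero f N : (forall i, (i < N)%nat -> f i = RtoC 0) -> csum f N = RtoC 0.
Proof. intros H. rewrite (csum_ext f (fun _ => RtoC 0)) by auto. rewrite csum_const.
  apply injective_projections; simpl; ring. Qed.
Lemma rsum_zero f N : (forall i, (i < N)%nat -> f i = 0) -> rsum f N = 0.
Proof. intros H. rewrite (rsum_ext f (fun _ => 0)) by auto. rewrite rsum_const. ring. Qed.

Lemma Cmod_csum f N : Cmod (csum f N) <= rsum (fun i => Cmod (f i)) N.
Proof. induction N; simpl. rewrite Cmod_0; lra. eapply Rle_trans. apply Cmod_triangle. lra. Qed.

Lemma csum_block f a B : csum f (a * B) = csum (fun i => csum (fun t => f (i * B + t)%nat) B) a.
Proof. induction a; simpl. auto. rewrite Nat.add_comm, csum_add, IHa. f_equal. Qed.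
Lemma rsum_block f a B : rsum f (a * B) = rsum (fun i => rsum (fun t => f (i * B + t)%nat) B) a.
Proof. induction a; simpl. auto. rewrite Nat.add_comm, rsum_add, IHa. f_equal. Qed.

Lemma Re_csum f N : Re (csum f N) = rsum (fun i => Re (f i)) N.
Proof. induction N; simpl; auto. rewrite <- IHN. auto. Qed.
Lemma Im_csum f N : Im (csum f N) = rsum (fun i => Im (f i)) N.
Proof. induction N; simpl; auto. rewrite <- IHN. auto. Qed.

Lemma sum_n_rsum (a : nat -> R) N : sum_n a N = rsum a (S N).
Proof. induction N. simpl. rewrite sum_O. ring. rewrite sum_Sn, IHN. simpl. unfold plus; simpl. ring. Qed.

Lemma series_bounded (a : nat -> R) B :
  (forall k, 0 <= a k) -> (forall N, rsum a N <= B) -> ex_series a /\ Series a <= B.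
Proof.
  intros Hpos HB.
  assert (Hinc : forall N, sum_n a N <= sum_n a (S N)).
  { intros N. rewrite !sum_n_rsum. apply rsum_mono; auto. }
  assert (Hex : ex_series a).
  { assert (ex_finite_lim_seq (sum_n a)).
    { apply ex_finite_lim_seq_incr with B. auto. intros N. rewrite sum_n_rsum. auto. }
    destruct H as [l Hl]. exists l. apply Hl. }
  split; auto.
  assert (Hl := Series_correct a Hex).
  apply (is_lim_seq_le (sum_n a) (fun _ => B) (Series a) B); auto.
  intros N. rewrite sum_n_rsum. auto. apply is_lim_seq_const.
Qed.

Lemma Series_fin (a : nat -> R) N : (forall k, (N <= k)%nat -> a k = 0) -> Series a = rsum a N.
Proof.
  intros H. apply is_series_unique.
  apply (filterlim_ext_loc (fun _ => rsum a N)).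
  exists N. intros M HM. rewrite sum_n_rsum. replace (S M) with (N + (S M - N))%nat by lia.
  rewrite rsum_add, (rsum_zero (fun t => a (N + t)%nat)). ring. intros; apply H; lia.
  apply filterlim_const.
Qed.



Lemma ex_series_fin (a : nat -> R) N : (forall k, (N <= k)%nat -> a k = 0) -> ex_series a.
Proof.
  intros H. exists (rsum a N).
  apply (filterlim_ext_loc (fun _ => rsum a N)).
  exists N. intros M HM. rewrite sum_n_rsum. replace (S M) with (N + (S M - N))%nat by lia.
  rewrite rsum_add, (rsum_zero (fun t => a (N + t)%nat)). ring. intros; apply H; lia.
  apply filterlim_const.
Qed.

Definition ek (k : nat) : nat -> C := fun i => if Nat.eq_dec i k then RtoC 1 else RtoC 0.

Lemma ek_H2 k : inH2 (ek k).
Proof. apply ex_series_fin with (S k). intros i Hi. unfold ek. destruct (Nat.eq_dec i k). lia.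
  rewrite Cmod_0. ring. Qed.

Lemma T_formula n T : (1 <= n)%nat -> is_adjoint_W n T -> forall g, inH2 g ->
  forall k, T g k = csum (fun t => g (n * k + t)%nat) n.
Proof.
  intros Hn HT g Hg k.
  destruct (HT (ek k) g (ek_H2 k) Hg) as [_ Heq].
  unfold H2inner in Heq.
  assert (E1 : forall (F : C -> R), (forall z, F (Cmult (RtoC 0) z) = 0) ->
     Series (fun m => F (Cmult (W n (ek k) m) (Cconj (g m)))) =
     rsum (fun t => F (Cmult (RtoC 1) (Cconj (g (n * k + t)%nat)))) n).
  { intros F HF. rewrite (Series_fin _ (n * k + n)).
    rewrite rsum_add. rewrite rsum_zero. rewrite Rplus_0_l. apply rsum_ext.
    intros t Ht. unfold W, ek. destruct (Nat.eq_dec ((n * k + t) / n) k) as [e|e]; auto.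
    exfalso; apply e. rewrite Nat.mul_comm, Nat.div_add_l by lia. rewrite Nat.div_small by lia. lia.
    intros i Hi. unfold W, ek. destruct (Nat.eq_dec (i / n) k) as [e|e]; auto.
    exfalso. assert (i / n < k)%nat. apply Nat.Div0.div_lt_upper_bound. lia. lia.
    intros i Hi. unfold W, ek. destruct (Nat.eq_dec (i / n) k) as [e|e]; auto.
    exfalso. assert (k + 1 <= i / n)%nat. apply Nat.div_le_lower_bound. lia. lia. lia. }
  assert (E2 : forall (F : C -> R), (forall z, F (Cmult (RtoC 0) z) = 0) ->
     Series (fun m => F (Cmult (ek k m) (Cconj (T g m)))) = F (Cmult (RtoC 1) (Cconj (T g k)))).
  { intros F HF. rewrite (Series_fin _ (S k)). simpl. rewrite rsum_zero. unfold ek.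
    destruct (Nat.eq_dec k k); [ring | lia].
    intros i Hi. unfold ek. destruct (Nat.eq_dec i k); auto. lia.
    intros i Hi. unfold ek. destruct (Nat.eq_dec i k); auto. lia. }
  assert (HRe : forall z, Re (Cmult (RtoC 0) z) = 0). { intros [a b]; simpl; ring. }
  assert (HIm : forall z, Im (Cmult (RtoC 0) z) = 0). { intros [a b]; simpl; ring. }
  assert (H1 : Series (fun m => Re (Cmult (W n (ek k) m) (Cconj (g m)))) = Series (fun m => Re (Cmult (ek k m) (Cconj (T g m))))) by exact (f_equal fst Heq).
  assert (H2 : Series (fun m => Im (Cmult (W n (ek k) m) (Cconj (g m)))) = Series (fun m => Im (Cmult (ek k m) (Cconj (T g m))))) by exact (f_equal snd Heq).
  rewrite (E1 Re HRe), (E2 Re HRe) in H1. rewrite (E1 Im HIm), (E2 Im HIm) in H2.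
  apply injective_projections.
  - change (fst (T g k)) with (Re (T g k)). change (fst (csum (fun t => g (n * k + t)%nat) n)) with (Re (csum (fun t => g (n * k + t)%nat) n)).
    rewrite Re_csum. rewrite <- (rsum_ext (fun t => Re (Cmult (RtoC 1) (Cconj (g (n * k + t)%nat))))).
    rewrite H1. destruct (T g k); simpl; ring.
    intros t _. destruct (g (n*k+t)%nat); simpl; ring.
  - change (snd (T g k)) with (Im (T g k)). change (snd (csum (fun t => g (n * k + t)%nat) n)) with (Im (csum (fun t => g (n * k + t)%nat) n)).
    rewrite Im_csum.
    assert (rsum (fun i => Im (g (n * k + i)%nat)) n = - rsum (fun t => Im (Cmult (RtoC 1) (Cconj (g (n * k + t)%nat)))) n).
    { replace (- rsum (fun t => Im (Cmult (RtoC 1) (Cconj (g (n * k + t)%nat)))) n)%R with (-1 * rsum (fun t => Im (Cmult (RtoC 1) (Cconj (g (n * k + t)%nat)))) n)%R by ring.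
      rewrite <- (rsum_scal (-1)). apply rsum_ext. intros t _. destruct (g (n*k+t)%nat); simpl; ring. }
    rewrite H, H2. destruct (T g k); simpl; ring.
Qed.

Lemma T_H2 n T : is_adjoint_W n T -> forall g, inH2 g -> inH2 (T g).
Proof. intros HT g Hg. exact (proj1 (HT (ek 0) g (ek_H2 0) Hg)). Qed.

Lemma Titer n T : (1 <= n)%nat -> is_adjoint_W n T -> forall g, inH2 g -> forall j,
  inH2 (Nat.iter j T g) /\
  forall i, Nat.iter j T g i = csum (fun m => g (i * n ^ j + m)%nat) (n ^ j).
Proof.
  intros Hn HT g Hg j. induction j as [|j [IH1 IH2]].
  - split. exact Hg. intros i. simpl. rewrite Nat.mul_1_r, Nat.add_0_r. ring.
  - change (Nat.iter (S j) T g) with (T (Nat.iter j T g)). split. apply (T_H2 n T HT); auto.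
    intros i. rewrite (T_formula n T Hn HT _ IH1 i).
    change (n ^ S j)%nat with (n * n ^ j)%nat. rewrite csum_block.
    apply csum_ext. intros t Ht. rewrite IH2. apply csum_ext. intros m Hm.
    f_equal. nia.
Qed.

Definition ind (A : nat -> Prop) (k : nat) : nat :=
  if excluded_middle_informative (A k) then 1%nat else 0%nat.

Lemma count_S A N : count_upto A (S N) = (count_upto A N + ind A (S N))%nat.
Proof. reflexivity. Qed.

Lemma count_mono A B N : (forall k, (1 <= k <= N)%nat -> A k -> B k) -> (count_upto A N <= count_upto B N)%nat.
Proof. induction N; intros H; simpl. lia.
  assert (count_upto A N <= count_upto B N)%nat by (apply IHN; intros; apply H; auto; lia).
  destruct (excluded_middle_informative (A (S N))), (excluded_middle_informative (B (S N))); try lia.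
  exfalso; apply n; apply H; auto; lia. Qed.

Lemma count_le_N A N : (count_upto A N <= N)%nat.
Proof. induction N; simpl. lia. destruct (excluded_middle_informative (A (S N))); lia. Qed.

Lemma count_mono_N A N M : (N <= M)%nat -> (count_upto A N <= count_upto A M)%nat.
Proof. induction 1. lia. simpl. lia. Qed.

Lemma count_or A B N : (count_upto (fun k => A k \/ B k) N <= count_upto A N + count_upto B N)%nat.
Proof. induction N; simpl. lia.
  destruct (excluded_middle_informative (A (S N) \/ B (S N))) as [[h|h]|h];
  destruct (excluded_middle_informative (A (S N))); destruct (excluded_middle_informative (B (S N))); try tauto; lia. Qed.

Lemma count_add A N M : count_upto A (N + M) = (count_upto A N + count_upto (fun k => A (N + k)%nat) M)%nat.
Proof. induction M. rewrite Nat.add_0_r; simpl; lia.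
  rewrite Nat.add_succ_r. simpl. rewrite IHM. rewrite Nat.add_succ_r. lia. Qed.

Lemma count_zero A N : (forall k, (1 <= k <= N)%nat -> ~ A k) -> count_upto A N = 0%nat.
Proof. induction N; intros H; simpl. auto. rewrite IHN by (intros; apply H; lia).
  destruct (excluded_middle_informative (A (S N))); auto. exfalso; apply (H (S N)); auto; lia. Qed.

Lemma count_bounded A c N : (forall k, (1 <= k)%nat -> A k -> (k <= c)%nat) -> (count_upto A N <= c)%nat.
Proof. intros H. destruct (Compare_dec.le_lt_dec N c).
  - pose proof (count_le_N A N). lia.
  - replace N with (c + (N - c))%nat by lia. rewrite count_add.
    rewrite (count_zero (fun k => A (c + k)%nat)). pose proof (count_le_N A c). lia.
    intros k Hk HA. apply H in HA; lia. Qed.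

Lemma count_interval A a w N : (forall k, (1 <= k)%nat -> A k -> (a <= k <= a + w)%nat) -> (count_upto A N <= w + 1)%nat.
Proof. intros H. destruct (Compare_dec.le_lt_dec N (a - 1)).
  - rewrite count_zero. lia. intros k Hk HA. apply H in HA; lia.
  - replace N with ((a - 1) + (N - (a - 1)))%nat by lia. rewrite count_add.
    rewrite (count_zero A (a - 1)). simpl.
    apply count_bounded. intros k Hk HA. apply H in HA; lia.
    intros k Hk HA. apply H in HA; lia. Qed.

Fixpoint nsum (f : nat -> nat) (K : nat) : nat :=
  match K with O => O | S m => (nsum f m + f (S m))%nat end.

Lemma nsum_le f g K : (forall i, (1 <= i <= K)%nat -> (f i <= g i)%nat) -> (nsum f K <= nsum g K)%nat.
Proof. induction K; intros H; simpl. lia. assert (nsum f K <= nsum g K)%nat by (apply IHK; intros; apply H; lia).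
  assert (f (S K) <= g (S K))%nat by (apply H; lia). lia. Qed.

Lemma count_exists (B : nat -> nat -> Prop) K N :
  (count_upto (fun k => exists i, (1 <= i <= K)%nat /\ B i k) N <= nsum (fun i => count_upto (B i) N) K)%nat.
Proof. induction K; simpl.
  - rewrite count_zero. lia. intros k _ [i [Hi _]]. lia.
  - eapply Nat.le_trans; [| apply Nat.add_le_mono; [apply IHK | apply Nat.le_refl]].
    eapply Nat.le_trans; [| apply count_or]. apply count_mono.
    intros k _ [i [Hi HB]]. destruct (Nat.eq_dec i (S K)). subst; right; auto. left; exists i; split; auto; lia.
Qed.

Lemma nsum_ind_mul (Q : nat -> Prop) c K : nsum (fun i => ind Q i * c)%nat K = (count_upto Q K * c)%nat.
Proof. induction K; simpl. auto. rewrite IHK. unfold ind. lia. Qed.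

Lemma count_multiples P q : (1 <= P)%nat -> count_upto (fun k => k mod P = 0)%nat (q * P) = q.
Proof. intros HP. induction q. auto.
  replace (S q * P)%nat with (q * P + ((P - 1) + 1))%nat by nia.
  rewrite count_add, IHq, count_add. rewrite count_zero. simpl.
  replace (q * P + (P - 1 + 1))%nat with (P + q * P)%nat by lia. rewrite Nat.Div0.mod_add, Nat.Div0.mod_same.
  destruct (excluded_middle_informative (0 = 0)%nat); lia.
  intros k Hk. rewrite Nat.add_comm, Nat.Div0.mod_add. rewrite Nat.mod_small by lia. lia.
Qed.

Lemma count_multiples_ge P N : (1 <= P)%nat -> (N / P <= count_upto (fun k => k mod P = 0)%nat N)%nat.
Proof. intros HP. rewrite <- (count_multiples P (N / P)) at 1 by auto. apply count_mono_N.
  rewrite Nat.mul_comm. apply Nat.Div0.mul_div_le. Qed.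

Fixpoint rsum1 (f : nat -> R) (K : nat) : R :=
  match K with O => 0%R | S m => (rsum1 f m + f (S m))%R end.
Lemma INR_nsum f K : INR (nsum f K) = rsum1 (fun i => INR (f i)) K.
Proof. induction K; simpl nsum; simpl rsum1. auto. rewrite plus_INR, IHK. auto. Qed.
Lemma rsum1_le f g K : (forall i, (1 <= i <= K)%nat -> f i <= g i) -> rsum1 f K <= rsum1 g K.
Proof. induction K; intros H; simpl. lra. assert (rsum1 f K <= rsum1 g K) by (apply IHK; intros; apply H; lia).
  assert (f (S K) <= g (S K)) by (apply H; lia). lra. Qed.
Lemma rsum1_geom K : rsum1 (fun i => (/2) ^ i)%R K = (1 - (/2) ^ K)%R.
Proof. induction K; simpl. ring. rewrite IHK. field. Qed.
Lemma rsum1_scal c f K : rsum1 (fun i => c * f i)%R K = (c * rsum1 f K)%R.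
Proof. induction K; simpl. ring. rewrite IHK; ring. Qed.

Local Open Scope nat_scope.

Fixpoint Pp (rad : nat -> nat) (l : nat) : nat :=
  match l with
  | O => (16 * (2 * rad 0 + 1))%nat
  | S l' => (2 ^ (l' + 5) * (2 * rad (S l') + 1) * Pp rad l')%nat
  end.

Definition Lab rad l k : Prop :=
  (1 <= k)%nat /\ (k mod Pp rad l = 0)%nat /\
  forall l' m', (l < l')%nat -> (1 <= m')%nat ->
     (k + rad l' < m' * Pp rad l' \/ m' * Pp rad l' + rad l' < k)%nat.

Lemma Pp_ge rad l : (2 ^ (l + 4) * (2 * rad l + 1) <= Pp rad l)%nat.
Proof. induction l; simpl Pp. simpl; lia.
  assert (1 <= 2 ^ (l + 4))%nat by (apply Nat.pow_le_mono_r with (a:=2%nat) (b:=0%nat); lia).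
  assert (1 <= Pp rad l)%nat by nia.
  replace (S l + 4)%nat with (l + 5)%nat by lia. nia. Qed.

Lemma Pp_pos rad l : (1 <= Pp rad l)%nat.
Proof. pose proof (Pp_ge rad l). assert (1 <= 2 ^ (l + 4))%nat by (apply Nat.pow_le_mono_r with (a:=2%nat) (b:=0%nat); lia). nia. Qed.

Lemma Pp_rad rad l : (2 * rad l + 1 <= Pp rad l)%nat.
Proof. pose proof (Pp_ge rad l). assert (1 <= 2 ^ (l + 4))%nat by (apply Nat.pow_le_mono_r with (a:=2%nat) (b:=0%nat); lia). nia. Qed.

Lemma Pp_lin rad l : (l + 1 <= Pp rad l)%nat.
Proof. pose proof (Pp_ge rad l). assert (l < 2 ^ l)%nat by (apply Nat.pow_gt_lin_r; lia).
  assert (2 ^ l <= 2 ^ (l + 4))%nat by (apply Nat.pow_le_mono_r; lia). nia. Qed.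

Lemma Pp_mono rad l l' : (l <= l')%nat -> (Pp rad l <= Pp rad l')%nat.
Proof. induction 1. lia. simpl Pp. assert (1 <= 2 ^ (m + 5))%nat by (apply Nat.pow_le_mono_r with (a:=2%nat) (b:=0%nat); lia). nia. Qed.

Lemma Pp_big rad l l' : (l < l')%nat -> (2 ^ (l' + 4) * (2 * rad l' + 1) * Pp rad l <= Pp rad l')%nat.
Proof. intros H. destruct l' as [|l'']. lia. simpl Pp. replace (S l'' + 4)%nat with (l'' + 5)%nat by lia.
  apply Nat.mul_le_mono_l. apply Pp_mono. lia. Qed.

Lemma Lab_ge rad l k : Lab rad l k -> (Pp rad l <= k)%nat.
Proof. intros [H1 [H2 _]]. destruct (Compare_dec.le_lt_dec (Pp rad l) k); auto.
  rewrite Nat.mod_small in H2; lia. Qed.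

Lemma Lab_uniq rad l l' k : Lab rad l k -> Lab rad l' k -> l = l'.
Proof. intros H H'. destruct (Nat.lt_trichotomy l l') as [h|[h|h]]; auto; exfalso.
  - destruct H' as [a [b _]]. destruct H as [_ [_ c]].
    assert (E := Nat.div_mod_eq k (Pp rad l')). rewrite b in E.
    destruct (c l' (k / Pp rad l')) as [e|e]; auto. 
    destruct (Nat.eq_dec (k / Pp rad l') 0) as [e0|e0]. rewrite e0 in E. lia. lia. nia. nia.
  - destruct H as [a [b _]]. destruct H' as [_ [_ c]].
    assert (E := Nat.div_mod_eq k (Pp rad l)). rewrite b in E.
    destruct (c l (k / Pp rad l)) as [e|e]; auto.
    destruct (Nat.eq_dec (k / Pp rad l) 0) as [e0|e0]. rewrite e0 in E. lia. lia. nia. nia.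
Qed.

Lemma Lab_sep rad l l' k k' : (forall a b, (a <= b)%nat -> (rad a <= rad b)%nat) ->
  Lab rad l k -> Lab rad l' k' -> (k < k')%nat -> (rad l <= k' - k /\ rad l' <= k' - k)%nat.
Proof. intros Hm H H' Hlt. destruct (Nat.lt_trichotomy l l') as [h|[h|h]].
  - destruct H' as [a [b _]]. destruct H as [_ [_ c]].
    assert (E := Nat.div_mod_eq k' (Pp rad l')). rewrite b in E.
    assert (rad l <= rad l')%nat by (apply Hm; lia).
    destruct (c l' (k' / Pp rad l')) as [e|e]; auto.
    destruct (Nat.eq_dec (k' / Pp rad l') 0) as [e0|e0]. rewrite e0 in E. lia. lia. lia. lia.
  - subst l'. destruct H as [a [b _]]. destruct H' as [a' [b' _]].
    assert (E := Nat.div_mod_eq k (Pp rad l)). rewrite b in E.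
    assert (E' := Nat.div_mod_eq k' (Pp rad l)). rewrite b' in E'.
    pose proof (Pp_rad rad l).
    set (P := Pp rad l) in *. set (x := k / P) in *. set (x' := k' / P) in *.
    assert (x < x'). { destruct (Compare_dec.le_lt_dec x' x) as [hh|hh]; auto. assert (P * x' <= P * x) by (apply Nat.mul_le_mono_l; auto). lia. }
    assert (P * (x + 1) <= P * x') by (apply Nat.mul_le_mono_l; lia). nia.
  - destruct H as [a [b _]]. destruct H' as [_ [_ c]].
    assert (E := Nat.div_mod_eq k (Pp rad l)). rewrite b in E.
    assert (rad l' <= rad l)%nat by (apply Hm; lia).
    destruct (c l (k / Pp rad l)) as [e|e]; auto.
    destruct (Nat.eq_dec (k / Pp rad l) 0) as [e0|e0]. rewrite e0 in E. lia. lia. lia. lia.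
Qed.

Local Close Scope nat_scope.

Lemma Bad_count rad l N :
  (count_upto (fun k => exists l' m', (l < l')%nat /\ (1 <= m')%nat /\ (m' * Pp rad l' <= k + rad l')%nat /\ (k <= m' * Pp rad l' + rad l')%nat) N
   <= nsum (fun l' => count_upto (fun m' => (l < l')%nat /\ (m' * Pp rad l' <= N + rad l')%nat) (2 * N) * (2 * rad l' + 1)) (2 * N))%nat.
Proof.
  set (Near := fun l' m' k => (l < l')%nat /\ (m' * Pp rad l' <= N + rad l')%nat /\ (m' * Pp rad l' <= k + rad l')%nat /\ (k <= m' * Pp rad l' + rad l')%nat).
  eapply Nat.le_trans.
  { apply (count_mono _ (fun k => exists l', (1 <= l' <= 2 * N)%nat /\ (fun l' k => exists m', (1 <= m' <= 2 * N)%nat /\ Near l' m' k) l' k)).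
    intros k Hk [l' [m' [H1 [H2 [H3 H4]]]]].
    pose proof (Pp_lin rad l'). pose proof (Pp_rad rad l').
    assert (Pp rad l' <= m' * Pp rad l')%nat by nia.
    exists l'. split. lia. exists m'. split. nia. unfold Near. repeat split; lia. }
  eapply Nat.le_trans. apply count_exists.
  apply nsum_le. intros l' Hl'.
  eapply Nat.le_trans. apply count_exists.
  rewrite <- nsum_ind_mul. apply nsum_le. intros m' Hm'.
  unfold ind. destruct (excluded_middle_informative ((l < l')%nat /\ (m' * Pp rad l' <= N + rad l')%nat)) as [[Q1 Q2]|Q].
  - replace (1 * (2 * rad l' + 1))%nat with (2 * rad l' + 0 + 1)%nat by lia.
    apply count_interval with (a := (m' * Pp rad l' - rad l')%nat).
    intros k _ [_ [_ [H3 H4]]]. pose proof (Pp_rad rad l'). nia.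
  - rewrite count_zero. lia. intros k _ [H1 [H2 _]]. apply Q; auto.
Qed.

Lemma INR_div_ge a b : (1 <= b)%nat -> (INR a / INR b - 1 <= INR (a / b))%R.
Proof. intros Hb. assert (E := Nat.div_mod_eq a b). assert (Hm := Nat.mod_upper_bound a b ltac:(lia)).
  assert (INR b > 0)%R by (apply lt_0_INR; lia).
  assert (INR a = INR b * INR (a / b) + INR (a mod b))%R by (rewrite <- mult_INR, <- plus_INR; f_equal; lia).
  assert (INR (a mod b) + 1 <= INR b)%R by (rewrite <- S_INR; apply le_INR; lia).
  apply Rmult_le_reg_r with (INR b); auto. unfold Rdiv. rewrite Rmult_minus_distr_r, Rmult_assoc, Rinv_l by lra. nra. Qed.

Lemma INR_div_le a b : (1 <= b)%nat -> (INR (a / b) <= INR a / INR b)%R.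
Proof. intros Hb. assert (INR b > 0)%R by (apply lt_0_INR; lia).
  assert (INR b * INR (a / b) <= INR a)%R by (rewrite <- mult_INR; apply le_INR; apply Nat.Div0.mul_div_le).
  apply Rmult_le_reg_r with (INR b); auto. unfold Rdiv. rewrite Rmult_assoc, Rinv_l by lra. nra. Qed.

Lemma term_bound rad l N l' :
  (INR (count_upto (fun m' => (l < l')%nat /\ (m' * Pp rad l' <= N + rad l')%nat) (2 * N) * (2 * rad l' + 1))
   <= INR N / (8 * INR (Pp rad l)) * (/2) ^ l')%R.
Proof.
  pose proof (Pp_pos rad l) as HP. assert (HPr : (INR (Pp rad l) > 0)%R) by (apply lt_0_INR; lia).
  assert (0 <= INR N / (8 * INR (Pp rad l)) * (/2) ^ l')%R.
  { apply Rmult_le_pos. apply Rmult_le_pos. apply pos_INR. left; apply Rinv_0_lt_compat; lra. apply pow_le; lra. }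
  destruct (Compare_dec.le_lt_dec l' l).
  - rewrite count_zero. simpl. lra. intros k _ [h _]. lia.
  - set (r := rad l'). set (P' := Pp rad l').
    assert (Hc : (count_upto (fun m' => (l < l')%nat /\ (m' * P' <= N + r)%nat) (2 * N) <= (N + r) / P')%nat).
    { apply count_bounded. intros k _ [_ h]. apply Nat.div_le_lower_bound. pose proof (Pp_pos rad l'). unfold P'; lia. lia. }
    pose proof (Pp_rad rad l') as HPr'. fold r P' in HPr'. pose proof (Pp_big rad l l' ltac:(lia)) as Hbig. fold r P' in Hbig.
    apply le_INR in Hbig. rewrite !mult_INR, pow_INR in Hbig. replace (INR 2) with 2%R in Hbig by (simpl; ring).
    assert (HP' : (INR P' > 0)%R) by (apply lt_0_INR; lia).
    destruct (Compare_dec.le_lt_dec P' (N + r)) as [h|h].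
    + assert (Hq : (INR ((N + r) / P') <= 2 * INR N / INR P')%R).
      { eapply Rle_trans. apply INR_div_le. lia. unfold Rdiv. apply Rmult_le_compat_r. left; apply Rinv_0_lt_compat; lra.
        rewrite plus_INR. assert (r <= N)%nat by lia. apply le_INR in H0. lra. }
      rewrite mult_INR. eapply Rle_trans. apply Rmult_le_compat_r. apply pos_INR. eapply Rle_trans. apply le_INR; apply Hc. apply Hq.
      replace (INR (2 * r + 1)) with (2 * INR r + 1)%R by (rewrite plus_INR, mult_INR; simpl; ring).
      replace (2 ^ (l' + 4))%R with (16 * 2 ^ l')%R in Hbig by (rewrite pow_add; simpl; ring).
      rewrite <- Rinv_pow. 
      assert (H2l : (2 ^ l' > 0)%R) by (apply pow_lt; lra).
      assert (Hr : (2 * INR r + 1 > 0)%R) by (pose proof (pos_INR r); lra).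
      apply Rmult_le_reg_r with (8 * INR (Pp rad l) * 2 ^ l' * INR P')%R. 
      repeat apply Rmult_lt_0_compat; lra.
      assert (HN := pos_INR N).
      replace (INR (2 * r + 1)) with (2 * INR r + 1)%R in Hbig by (rewrite plus_INR, mult_INR; simpl; ring).
      assert (INR N * (16 * 2 ^ l' * (2 * INR r + 1) * INR (Pp rad l)) <= INR N * INR P')%R by (apply Rmult_le_compat_l; auto).
      field_simplify; try lra. nra.
    + assert ((N + r) / P' = 0)%nat by (apply Nat.div_small; lia). rewrite H0 in Hc.
      assert (count_upto (fun m' => (l < l')%nat /\ (m' * P' <= N + r)%nat) (2 * N) = 0)%nat by lia.
      rewrite H1. simpl. lra.
Qed.

Lemma Lab_count rad l N :
  (INR N / INR (Pp rad l) - 1 - INR N / (8 * INR (Pp rad l)) <= INR (count_upto (Lab rad l) N))%R.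
Proof.
  pose proof (Pp_pos rad l) as HP.
  set (Bad := fun k => exists l' m', (l < l')%nat /\ (1 <= m')%nat /\ (m' * Pp rad l' <= k + rad l')%nat /\ (k <= m' * Pp rad l' + rad l')%nat).
  assert (H1 : (N / Pp rad l <= count_upto (Lab rad l) N + count_upto Bad N)%nat).
  { eapply Nat.le_trans. apply (count_multiples_ge (Pp rad l) N HP).
    eapply Nat.le_trans; [|apply count_or]. apply count_mono.
    intros k Hk Hm. destruct (classic (Bad k)) as [b|b]. right; auto. left.
    split. lia. split. auto. intros l' m' h1 h2.
    destruct (Compare_dec.le_lt_dec (m' * Pp rad l') (k + rad l')); [|left; lia].
    destruct (Compare_dec.le_lt_dec k (m' * Pp rad l' + rad l')); [|right; lia].
    exfalso. apply b. exists l', m'. repeat split; auto. }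
  assert (H2 := Bad_count rad l N). fold Bad in H2.
  apply le_INR in H1. apply le_INR in H2. rewrite plus_INR in H1. rewrite INR_nsum in H2.
  assert (H3 : (rsum1 (fun i => INR (count_upto (fun m' => (l < i)%nat /\ (m' * Pp rad i <= N + rad i)%nat) (2 * N) * (2 * rad i + 1))) (2 * N)
     <= rsum1 (fun i => INR N / (8 * INR (Pp rad l)) * (/2) ^ i)%R (2 * N))%R).
  { apply rsum1_le. intros; apply term_bound. }
  rewrite rsum1_scal, rsum1_geom in H3.
  assert (0 < (/2) ^ (2 * N))%R by (apply pow_lt; lra).
  assert (0 <= INR N / (8 * INR (Pp rad l)))%R.
  { apply Rmult_le_pos. apply pos_INR. left; apply Rinv_0_lt_compat. assert (INR (Pp rad l) > 0)%R by (apply lt_0_INR; lia). lra. }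
  pose proof (INR_div_ge N (Pp rad l) HP). nra.
Qed.

Lemma LimInf_pos (u : nat -> R) c N0 : (0 < c)%R -> (forall N, (N0 <= N)%nat -> (c <= u N)%R) -> Rbar_lt 0 (LimInf_seq u).
Proof. intros Hc H. apply Rbar_lt_le_trans with (Finite c). simpl; auto.
  rewrite <- (LimInf_seq_const c). apply LimInf_le. exists N0. auto. Qed.

Lemma Lab_density rad l : Rbar_lt 0 (lower_density (Lab rad l)).
Proof.
  pose proof (Pp_pos rad l) as HP. assert (HPr : (INR (Pp rad l) > 0)%R) by (apply lt_0_INR; lia).
  apply LimInf_pos with (c := (/ (2 * INR (Pp rad l)))%R) (N0 := (4 * Pp rad l)%nat).
  apply Rinv_0_lt_compat; lra.
  intros N HN. assert (HNr : (INR N >= 4 * INR (Pp rad l))%R) by (replace 4%R with (INR 4) by (simpl; ring); rewrite <- mult_INR; apply Rle_ge, le_INR; auto).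
  pose proof (Lab_count rad l N).
  apply Rmult_le_reg_r with (INR N). lra. unfold Rdiv. rewrite Rmult_assoc, Rinv_l by lra.
  apply Rle_trans with (INR N / INR (Pp rad l) - 1 - INR N / (8 * INR (Pp rad l)))%R; [|lra].
  apply Rmult_le_reg_r with (8 * INR (Pp rad l))%R. lra.
  field_simplify; try lra.
Qed.

Record good (n : nat) (x : nat -> nat -> C) (G : nat -> nat) (M : nat -> R) (rad : nat -> nat) : Prop := {
  g_n : (2 <= n)%nat;
  g_mono : forall a b, (a <= b)%nat -> (rad a <= rad b)%nat;
  g_radG : forall l, (G l + 1 <= rad l)%nat;
  g_sum0 : forall l, csum (x l) (n ^ G l) = RtoC 0;
  g_supp : forall l i, (n ^ G l <= i)%nat -> x l i = RtoC 0;
  g_M : forall l i, Cmod (x l i) <= M l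
}.

Definition Own (G : nat -> nat) rad (d j l : nat) : Prop :=
  Lab rad l j /\ (j <= d + 1)%nat /\ (d < j + G l)%nat.

Lemma Lab_pos rad l j : Lab rad l j -> (1 <= j)%nat.
Proof. intros [h _]; auto. Qed.

Lemma Own_uniq n x G M rad d j l j' l' : good n x G M rad -> Own G rad d j l -> Own G rad d j' l' -> j = j' /\ l = l'.
Proof.
  intros Hg [H1 [H2 H3]] [H1' [H2' H3']].
  assert (j = j').
  { destruct (Nat.lt_trichotomy j j') as [h|[h|h]]; auto; exfalso.
    - destruct (Lab_sep rad l l' j j' (g_mono _ _ _ _ _ Hg) H1 H1' h). pose proof (g_radG _ _ _ _ _ Hg l). lia.
    - destruct (Lab_sep rad l' l j' j (g_mono _ _ _ _ _ Hg) H1' H1 h). pose proof (g_radG _ _ _ _ _ Hg l'). lia. }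
  subst j'. split; auto. eapply Lab_uniq; eauto.
Qed.

Lemma gen_uniq n d d' m : (2 <= n)%nat -> (n ^ d <= m < n ^ S d)%nat -> (n ^ d' <= m < n ^ S d')%nat -> d = d'.
Proof. intros Hn H H'. destruct (Nat.lt_trichotomy d d') as [h|[h|h]]; auto; exfalso.
  - assert (n ^ S d <= n ^ d')%nat by (apply Nat.pow_le_mono_r; lia). lia.
  - assert (n ^ S d' <= n ^ d)%nat by (apply Nat.pow_le_mono_r; lia). lia. Qed.

Definition yval (n : nat) (x : nat -> nat -> C) (d j l m : nat) : C :=
  if Nat.eq_dec d (j - 1) then Cmult (RtoC (/ INR ((n - 1) * n ^ (j - 1)))) (x l 0%nat)
  else Cmult (RtoC (/ INR (n ^ j))) (x l (m / n ^ j)%nat).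

Definition ybig (n : nat) (x : nat -> nat -> C) (G : nat -> nat) rad (m : nat) : C :=
  match excluded_middle_informative (exists p : nat * nat * nat,
     (n ^ fst (fst p) <= m < n ^ S (fst (fst p)))%nat /\ Own G rad (fst (fst p)) (snd (fst p)) (snd p)) with
  | left H => let p := proj1_sig (constructive_indefinite_description _ H) in
              yval n x (fst (fst p)) (snd (fst p)) (snd p) m
  | right _ => RtoC 0
  end.

Lemma ybig_spec n x G M rad d j l m : good n x G M rad -> (n ^ d <= m < n ^ S d)%nat -> Own G rad d j l ->
  ybig n x G rad m = yval n x d j l m.
Proof.
  intros Hg Hm Ho. unfold ybig. destruct excluded_middle_informative as [H|H].
  - destruct (constructive_indefinite_description _ H) as [[[d' j'] l'] [Hm' Ho']]. simpl in *.
    assert (d = d') by (apply (gen_uniq n d d' m (g_n _ _ _ _ _ Hg) Hm Hm')). subst d'.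
    destruct (Own_uniq n x G M rad d j l j' l' Hg Ho Ho'). subst; auto.
  - exfalso. apply H. exists (d, j, l). simpl; auto.
Qed.

Lemma ybig_zero n x G M rad d m : good n x G M rad -> (n ^ d <= m < n ^ S d)%nat -> (forall j l, ~ Own G rad d j l) ->
  ybig n x G rad m = RtoC 0.
Proof.
  intros Hg Hm Ho. unfold ybig. destruct excluded_middle_informative as [H|H]; auto.
  destruct (constructive_indefinite_description _ H) as [[[d' j'] l'] [Hm' Ho']]. simpl in *.
  assert (d = d') by (apply (gen_uniq n d d' m (g_n _ _ _ _ _ Hg) Hm Hm')). subst d'.
  exfalso; eapply Ho; eauto.
Qed.

Lemma ybig_0 n x G rad : (1 <= n)%nat -> ybig n x G rad 0 = RtoC 0.
Proof. intros Hn. unfold ybig. destruct excluded_middle_informative as [H|H]; auto.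
  exfalso. destruct H as [[[d j] l] [Hm _]]. simpl in Hm. assert (1 <= n ^ d)%nat by (apply Nat.pow_le_mono_r with (a:=n) (b:=0%nat); lia). lia. Qed.

Lemma RtoC_inv_cancel a z : a <> 0%R -> Cmult (RtoC (INR 1 * a)) (Cmult (RtoC (/ a)) z) = z.
Proof. intros Ha. destruct z as [u v]. unfold RtoC, Cmult. simpl. apply injective_projections; simpl; field; auto. Qed.

Lemma Cmult_RtoC_assoc a b z : Cmult (RtoC a) (Cmult (RtoC b) z) = Cmult (RtoC (a * b)) z.
Proof. destruct z as [u v]. unfold RtoC, Cmult. apply injective_projections; simpl; ring. Qed.

Lemma RtoC_mul_inv a z : a <> 0%R -> Cmult (RtoC a) (Cmult (RtoC (/ a)) z) = z.
Proof. intros Ha. rewrite Cmult_RtoC_assoc, Rinv_r by auto. destruct z; unfold RtoC, Cmult; apply injective_projections; simpl; ring. Qed.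

Lemma pow_pos_nat n d : (1 <= n)%nat -> (1 <= n ^ d)%nat.
Proof. intros Hn. apply Nat.pow_le_mono_r with (a:=n) (b:=0%nat); lia. Qed.

Lemma pow_S_sub n d : (1 <= n)%nat -> (n ^ S d - n ^ d = (n - 1) * n ^ d)%nat.
Proof. intros Hn. simpl. rewrite Nat.mul_sub_distr_r. lia. Qed.

Definition Psum n x G rad d := csum (ybig n x G rad) (n ^ d).
Definition tot n x G rad d := csum (fun t => ybig n x G rad (n ^ d + t)%nat) (n ^ S d - n ^ d).

Lemma Psum_S n x G rad d : (1 <= n)%nat -> Psum n x G rad (S d) = Cplus (Psum n x G rad d) (tot n x G rad d).
Proof. intros Hn. unfold Psum, tot. replace (n ^ S d)%nat with (n ^ d + (n ^ S d - n ^ d))%nat at 1.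
  apply csum_add. simpl. nia. Qed.

Lemma tot_none n x G M rad d : good n x G M rad -> (forall j l, ~ Own G rad d j l) -> tot n x G rad d = RtoC 0.
Proof. intros Hg H. unfold tot. apply csum_zero. intros t Ht. eapply ybig_zero; eauto. lia. Qed.

Lemma tot_first n x G M rad j l : good n x G M rad -> Own G rad (j - 1) j l -> tot n x G rad (j - 1) = x l 0%nat.
Proof.
  intros Hg Ho. pose proof (g_n _ _ _ _ _ Hg) as Hn. unfold tot.
  rewrite (csum_ext _ (fun _ => Cmult (RtoC (/ INR ((n - 1) * n ^ (j - 1)))) (x l 0%nat))).
  rewrite csum_const. rewrite pow_S_sub by lia. apply RtoC_mul_inv.
  apply not_0_INR. pose proof (pow_pos_nat n (j - 1)). nia.
  intros t Ht. rewrite (ybig_spec n x G M rad (j - 1) j l); auto. unfold yval.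
  destruct (Nat.eq_dec (j - 1) (j - 1)); [auto | lia]. lia.
Qed.

Lemma tot_mid n x G M rad d j l : good n x G M rad -> Own G rad d j l -> (j <= d)%nat ->
  tot n x G rad d = csum (fun i => x l (n ^ (d - j) + i)%nat) (n ^ S (d - j) - n ^ (d - j)).
Proof.
  intros Hg Ho Hjd. pose proof (g_n _ _ _ _ _ Hg) as Hn. unfold tot.
  set (g := (d - j)%nat). assert (Hd : d = (g + j)%nat) by (unfold g; lia).
  assert (E1 : (n ^ d = n ^ g * n ^ j)%nat) by (rewrite Hd, Nat.pow_add_r; auto).
  assert (E2 : (n ^ S d - n ^ d = (n ^ S g - n ^ g) * n ^ j)%nat).
  { rewrite !pow_S_sub by lia. rewrite E1. ring. }
  rewrite E2, csum_block. apply csum_ext. intros i Hi.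
  assert (Hpj := pow_pos_nat n j ltac:(lia)).
  assert (Hj1 : (1 <= j)%nat) by (destruct Ho as [HL _]; apply (Lab_pos _ _ _ HL)).
  rewrite (csum_ext _ (fun _ => Cmult (RtoC (/ INR (n ^ j))) (x l (n ^ g + i)%nat))).
  rewrite csum_const. apply RtoC_mul_inv. apply not_0_INR. lia.
  intros s Hs. rewrite (ybig_spec n x G M rad d j l); auto. unfold yval.
  destruct (Nat.eq_dec d (j - 1)). lia. f_equal. f_equal.
  replace (n ^ d + (i * n ^ j + s))%nat with ((n ^ g + i) * n ^ j + s)%nat by (rewrite E1; ring).
  rewrite Nat.div_add_l by lia. rewrite Nat.div_small by lia. lia.
  split. lia. rewrite E1. simpl. 
  assert (i + 1 <= n ^ S g - n ^ g)%nat by lia. rewrite pow_S_sub in H by lia.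
  assert ((i + 1) * n ^ j <= (n - 1) * n ^ g * n ^ j)%nat by (apply Nat.mul_le_mono_r; auto).
  rewrite Hd. rewrite Nat.pow_add_r. nia.
Qed.

Lemma Own_start n x G M rad j l : good n x G M rad -> Lab rad l j -> Own G rad (j - 1) j l.
Proof. intros Hg HL. pose proof (Lab_pos _ _ _ HL). split; auto. split; lia. Qed.

Lemma Psum_window n x G M rad j l : good n x G M rad -> Lab rad l j -> forall g, (g <= G l)%nat ->
  Psum n x G rad (j + g) = Cplus (Psum n x G rad (j - 1)) (csum (x l) (n ^ g)).
Proof.
  intros Hg HL. pose proof (g_n _ _ _ _ _ Hg) as Hn. pose proof (Lab_pos _ _ _ HL) as Hj.
  induction g; intros Hgl.
  - replace (j + 0)%nat with (S (j - 1)) by lia. rewrite Psum_S by lia.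
    rewrite (tot_first n x G M rad j l Hg (Own_start _ _ _ _ _ _ _ Hg HL)). simpl. f_equal. ring.
  - replace (j + S g)%nat with (S (j + g)) by lia. rewrite Psum_S by lia. rewrite IHg by lia.
    rewrite (tot_mid n x G M rad (j + g) j l Hg). replace (j + g - j)%nat with g by lia.
    replace (n ^ S g)%nat with (n ^ g + (n ^ S g - n ^ g))%nat at 2. rewrite csum_add. ring.
    simpl. nia. split; auto. lia. lia.
Qed.

Lemma start_clean n x G M rad j l : good n x G M rad -> Lab rad l j ->
  forall j' l', Lab rad l' j' -> ~ (j' - 1 < j - 1 < j' + G l')%nat.
Proof. intros Hg HL j' l' HL' [h1 h2].
  assert (Own G rad (j - 1) j' l') by (split; auto; lia).
  destruct (Own_uniq n x G M rad (j - 1) j' l' j l Hg H (Own_start _ _ _ _ _ _ _ Hg HL)). lia. Qed.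

Lemma Psum_zero n x G M rad : good n x G M rad -> forall d, (forall j l, Lab rad l j -> ~ (j - 1 < d < j + G l)%nat) ->
  Psum n x G rad d = RtoC 0.
Proof.
  intros Hg. pose proof (g_n _ _ _ _ _ Hg) as Hn.
  intros d. induction d as [d IH] using (well_founded_induction Wf_nat.lt_wf). intros Hd.
  destruct d as [|d'].
  - unfold Psum. simpl. rewrite ybig_0 by lia. ring.
  - destruct (classic (exists j l, Own G rad d' j l)) as [[j [l Ho]]|Hno].
    + destruct Ho as [HL [h1 h2]]. pose proof (Lab_pos _ _ _ HL).
      assert (S d' = j + G l)%nat. { destruct (Compare_dec.le_lt_dec (j + G l) (S d')). lia. exfalso; apply (Hd j l HL). lia. }
      rewrite H0. rewrite (Psum_window n x G M rad j l Hg HL (G l)) by lia.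
      rewrite (g_sum0 _ _ _ _ _ Hg). rewrite IH. ring. lia.
      apply (start_clean n x G M rad j l Hg HL).
    + rewrite Psum_S by lia. rewrite (tot_none n x G M rad d' Hg). rewrite IH. ring. lia.
      intros j l HL [h1 h2]. apply Hno. exists j, l. split; auto; lia.
      intros j l Ho. apply Hno; eauto.
Qed.

Lemma Psum_lab n x G M rad j l : good n x G M rad -> Lab rad l j -> Psum n x G rad j = x l 0%nat.
Proof. intros Hg HL. pose proof (Lab_pos _ _ _ HL).
  replace j with (j + 0)%nat at 1 by lia. rewrite (Psum_window n x G M rad j l Hg HL 0) by lia.
  rewrite (Psum_zero n x G M rad Hg). simpl. ring. apply (start_clean n x G M rad j l Hg HL). Qed.

Lemma pow_mono_exp (a : R) (m k : nat) : (1 <= a)%R -> (m <= k)%nat -> (a ^ m <= a ^ k)%R.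
Proof. intros Ha Hmk. apply Rle_pow; auto. Qed.

Lemma err_ineq (q M d : R) (g j j'' G'' : nat) :
  (2 <= q)%R -> (0 <= M)%R -> (0 < d)%R -> (g + j < j'' + G'')%nat -> (j < j'')%nat ->
  (M ^ 2 * q ^ (G'' + 2) * (4/3) ^ G'' * (4 / d) <= (3/2) ^ (j'' - j))%R ->
  (q ^ (g + 1) * (q ^ j * (M / q ^ (j'' - 1))) ^ 2 <= d / 4 * (3/4) ^ g)%R.
Proof.
  intros Hq HM Hd Hg Hj HA.
  set (D := (j'' - j)%nat) in *. assert (Ej : j'' = (j + D)%nat) by (unfold D; lia).
  assert (HD : (1 <= D)%nat) by (unfold D; lia).
  rewrite Ej. replace (j + D - 1)%nat with (j + (D - 1))%nat by lia.
  assert (Hqp : forall k, (0 < q ^ k)%R) by (intros; apply pow_lt; lra).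
  rewrite (pow_add q j (D - 1)).
  replace (q ^ j * (M / (q ^ j * q ^ (D - 1))))%R with (M / q ^ (D - 1))%R by (field; split; apply Rgt_not_eq, Hqp).
  assert (H43 : forall k, (0 < (4/3) ^ k)%R) by (intros; apply pow_lt; lra).
  assert (H34 : forall k, (0 < (3/4) ^ k)%R) by (intros; apply pow_lt; lra).
  assert (K1 : (q ^ (g + 1) * (4/3) ^ g <= q ^ (D + G'') * (4/3) ^ (D + G''))%R).
  { apply Rmult_le_compat. left; auto. left; auto. apply pow_mono_exp; [lra | lia]. apply pow_mono_exp; [lra | lia]. }
  assert (K2 : ((3/2) ^ D * (4/3) ^ D = 2 ^ D)%R) by (rewrite <- Rpow_mult_distr; f_equal; field).
  assert (K3 : (2 ^ D <= q ^ D)%R) by (apply pow_incr; lra).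
  assert (K4 : (q ^ D * q ^ D = q ^ (D - 1) * q ^ (D - 1) * (q * q))%R).
  { replace D with (S (D - 1)) at 1 2 by lia. simpl. ring. }
  assert (E34 : ((3/4) ^ g * (4/3) ^ g = 1)%R) by (rewrite <- Rpow_mult_distr; replace (3/4*(4/3))%R with 1%R by field; apply pow1).
  apply Rmult_le_reg_r with ((4/3) ^ g * 4 * q ^ (D - 1) * q ^ (D - 1))%R.
  { repeat apply Rmult_lt_0_compat; auto; lra. }
  replace (d / 4 * (3 / 4) ^ g * ((4 / 3) ^ g * 4 * q ^ (D - 1) * q ^ (D - 1)))%R
    with (d * ((3/4) ^ g * (4/3) ^ g) * q ^ (D - 1) * q ^ (D - 1))%R by (field).
  rewrite E34.
  replace (q ^ (g + 1) * (M / q ^ (D - 1)) ^ 2 * ((4 / 3) ^ g * 4 * q ^ (D - 1) * q ^ (D - 1)))%R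
    with (4 * M ^ 2 * (q ^ (g + 1) * (4/3) ^ g))%R by (field; apply Rgt_not_eq, Hqp).
  rewrite (pow_add q D G''), (pow_add (4/3) D G'') in K1. rewrite (pow_add q G'' 2) in HA.
  assert (HM2 : (0 <= M ^ 2)%R) by (apply pow2_ge_0).
  apply Rle_trans with (4 * M ^ 2 * (q ^ D * q ^ G'' * ((4/3) ^ D * (4/3) ^ G'')))%R.
  { apply Rmult_le_compat_l. lra. auto. }
  assert (HA' : (4 * M ^ 2 * q ^ G'' * (4/3) ^ G'' * (q * q) <= d * (3/2) ^ D)%R).
  { simpl in HA. apply Rmult_le_reg_r with (/ d)%R. apply Rinv_0_lt_compat; auto.
    replace (d * (3/2) ^ D * / d)%R with ((3/2) ^ D)%R by (field; lra).
    eapply Rle_trans; [|apply HA]. right. field. lra. }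
  assert (Hq2 : (0 < q * q)%R) by nra.
  apply Rmult_le_reg_r with (q * q)%R; auto.
  replace (4 * M ^ 2 * (q ^ D * q ^ G'' * ((4 / 3) ^ D * (4 / 3) ^ G'')) * (q * q))%R
    with ((4 * M ^ 2 * q ^ G'' * (4 / 3) ^ G'' * (q * q)) * (q ^ D * (4/3) ^ D))%R by ring.
  apply Rle_trans with (d * (3/2) ^ D * (q ^ D * (4/3) ^ D))%R.
  { apply Rmult_le_compat_r. specialize (H43 D); specialize (Hqp D). nra. auto. }
  replace (d * (3 / 2) ^ D * (q ^ D * (4 / 3) ^ D))%R with (d * ((3/2) ^ D * (4/3) ^ D) * q ^ D)%R by ring.
  rewrite K2.
  replace (d * 1 * q ^ (D - 1) * q ^ (D - 1) * (q * q))%R with (d * (q ^ D * q ^ D))%R by (rewrite K4; ring).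
  specialize (Hqp D). rewrite Rmult_assoc. apply Rmult_le_compat_l. lra. apply Rmult_le_compat_r. lra. auto.
Qed.

Lemma Cmod_RtoC_mult c z : (0 <= c)%R -> Cmod (Cmult (RtoC c) z) = (c * Cmod z)%R.
Proof. intros Hc. rewrite Cmod_mult, Cmod_R, Rabs_pos_eq; auto. Qed.

Lemma ybig_bound n x G M rad d j l m : good n x G M rad -> Own G rad d j l -> (n ^ d <= m < n ^ S d)%nat ->
  (Cmod (ybig n x G rad m) <= M l / INR n ^ (j - 1))%R.
Proof.
  intros Hg Ho Hm. pose proof (g_n _ _ _ _ _ Hg) as Hn.
  assert (Hq : (2 <= INR n)%R) by (replace 2%R with (INR 2) by (simpl; ring); apply le_INR; auto).
  assert (Hqp : forall k, (0 < INR n ^ k)%R) by (intros; apply pow_lt; lra).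
  pose proof (g_M _ _ _ _ _ Hg l) as HM.
  assert (HM0 : (0 <= M l)%R) by (eapply Rle_trans; [apply Cmod_ge_0 | apply (HM 0%nat)]).
  rewrite (ybig_spec n x G M rad d j l m Hg Hm Ho). unfold yval.
  pose proof (Lab_pos _ _ _ (proj1 Ho)) as Hj.
  destruct (Nat.eq_dec d (j - 1)).
  - rewrite Cmod_RtoC_mult. rewrite mult_INR, pow_INR.
    assert (1 <= INR (n - 1))%R by (replace 1%R with (INR 1) by auto; apply le_INR; lia).
    unfold Rdiv. rewrite Rmult_comm. rewrite Rinv_mult. 
    specialize (Hqp (j - 1)%nat). specialize (HM 0%nat).
    assert (0 < / INR (n - 1) <= 1)%R. { split. apply Rinv_0_lt_compat; lra. rewrite <- Rinv_1. apply Rinv_le_contravar; lra. }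
    assert (0 < / INR n ^ (j - 1))%R by (apply Rinv_0_lt_compat; auto).
    assert (0 <= Cmod (x l 0%nat))%R by apply Cmod_ge_0.
    assert (Cmod (x l 0%nat) * (/ INR (n - 1) * / INR n ^ (j - 1)) <= Cmod (x l 0%nat) * / INR n ^ (j - 1))%R by (apply Rmult_le_compat_l; [auto | nra]).
    assert (Cmod (x l 0%nat) * / INR n ^ (j - 1) <= M l * / INR n ^ (j - 1))%R by (apply Rmult_le_compat_r; lra). lra.
    left. apply Rinv_0_lt_compat. apply lt_0_INR. pose proof (pow_pos_nat n (j - 1)). nia.
  - rewrite Cmod_RtoC_mult. rewrite pow_INR.
    assert (Ej : (INR n ^ j = INR n * INR n ^ (j - 1))%R) by (replace j with (S (j - 1)) at 1 by lia; reflexivity).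
    rewrite Ej.
    assert (0 <= Cmod (x l (m / n ^ j)%nat))%R by apply Cmod_ge_0.
    specialize (Hqp (j - 1)%nat). specialize (HM (m / n ^ j)%nat).
    rewrite Rinv_mult. unfold Rdiv.
    assert (0 < / INR n <= 1)%R. { split. apply Rinv_0_lt_compat; lra. rewrite <- Rinv_1. apply Rinv_le_contravar; lra. }
    assert (0 < / INR n ^ (j - 1))%R by (apply Rinv_0_lt_compat; auto).
    rewrite Rmult_comm.
    assert (Cmod (x l (m / n ^ j)%nat) * (/ INR n * / INR n ^ (j - 1)) <= Cmod (x l (m / n ^ j)%nat) * / INR n ^ (j - 1))%R by (apply Rmult_le_compat_l; [auto | nra]).
    assert (Cmod (x l (m / n ^ j)%nat) * / INR n ^ (j - 1) <= M l * / INR n ^ (j - 1))%R by (apply Rmult_le_compat_r; lra). lra.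
    left; apply Rinv_0_lt_compat; apply lt_0_INR; pose proof (pow_pos_nat n j); lia.
Qed.

Definition BS n x G rad j i := csum (fun m => ybig n x G rad (i * n ^ j + m)%nat) (n ^ j).

Lemma gen_shift n g j i m : (1 <= n)%nat -> (n ^ g <= i < n ^ S g)%nat -> (m < n ^ j)%nat ->
  (n ^ (g + j) <= i * n ^ j + m < n ^ S (g + j))%nat.
Proof. intros Hn Hi Hm. rewrite Nat.pow_add_r. replace (S (g + j)) with (S g + j)%nat by lia. rewrite Nat.pow_add_r.
  split. nia. assert ((i + 1) * n ^ j <= n ^ S g * n ^ j)%nat by (apply Nat.mul_le_mono_r; lia). nia. Qed.

Lemma BS_0 n x G M rad j l : good n x G M rad -> Lab rad l j -> BS n x G rad j 0 = x l 0%nat.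
Proof. intros Hg HL. unfold BS. rewrite <- (Psum_lab n x G M rad j l Hg HL). unfold Psum. apply csum_ext. intros; f_equal. Qed.

Lemma BS_own n x G M rad j l g i : good n x G M rad -> Lab rad l j -> (n ^ g <= i < n ^ S g)%nat -> (g < G l)%nat ->
  BS n x G rad j i = x l i.
Proof.
  intros Hg HL Hi Hgl. pose proof (g_n _ _ _ _ _ Hg) as Hn. pose proof (Lab_pos _ _ _ HL) as Hj.
  assert (Hpj := pow_pos_nat n j ltac:(lia)).
  unfold BS. rewrite (csum_ext _ (fun _ => Cmult (RtoC (/ INR (n ^ j))) (x l i))).
  rewrite csum_const. apply RtoC_mul_inv. apply not_0_INR. lia.
  intros m Hm. rewrite (ybig_spec n x G M rad (g + j) j l); auto.
  unfold yval. destruct (Nat.eq_dec (g + j) (j - 1)). lia. f_equal. f_equal.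
  rewrite Nat.div_add_l by lia. rewrite Nat.div_small by lia. lia.
  apply gen_shift; auto; lia. split; auto. lia.
Qed.

Lemma BS_none n x G M rad j g i : good n x G M rad -> (n ^ g <= i < n ^ S g)%nat -> (forall j'' l'', ~ Own G rad (g + j) j'' l'') ->
  BS n x G rad j i = RtoC 0.
Proof. intros Hg Hi Hno. pose proof (g_n _ _ _ _ _ Hg) as Hn. unfold BS. apply csum_zero. intros m Hm.
  eapply ybig_zero; eauto. apply gen_shift; auto; lia. Qed.

Lemma BS_far n x G M rad j l g i j'' l'' : good n x G M rad -> Lab rad l j -> (n ^ g <= i < n ^ S g)%nat -> (G l <= g)%nat ->
  Own G rad (g + j) j'' l'' ->
  (j < j'')%nat /\ (Cmod (BS n x G rad j i) <= INR n ^ j * (M l'' / INR n ^ (j'' - 1)))%R.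
Proof.
  intros Hg HL Hi Hgl Ho. pose proof (g_n _ _ _ _ _ Hg) as Hn.
  split.
  - destruct Ho as [HL'' [h1 h2]]. destruct (Nat.lt_trichotomy j j'') as [h|[h|h]]; auto; exfalso.
    + subst j''. assert (l = l'') by (eapply Lab_uniq; eauto). subst. lia.
    + destruct (Lab_sep rad l'' l j'' j (g_mono _ _ _ _ _ Hg) HL'' HL h). pose proof (g_radG _ _ _ _ _ Hg l''). lia.
  - unfold BS. eapply Rle_trans. apply Cmod_csum.
    eapply Rle_trans. apply (rsum_le _ (fun _ => M l'' / INR n ^ (j'' - 1))%R).
    intros m Hm. eapply ybig_bound; eauto. apply gen_shift; auto; lia.
    rewrite rsum_const, pow_INR. right; auto.
Qed.

Lemma rsum_gens n f D : (1 <= n)%nat ->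
  rsum f (n ^ D) = (f 0%nat + rsum (fun g => rsum (fun t => f (n ^ g + t)%nat) (n ^ S g - n ^ g)) D)%R.
Proof. intros Hn. induction D.
  - simpl. ring.
  - replace (n ^ S D)%nat with (n ^ D + (n ^ S D - n ^ D))%nat at 1 by (simpl; nia).
    rewrite rsum_add, IHD. cbn [rsum]. ring. Qed.

Lemma rsum_geom34 D : rsum (fun g => (3/4) ^ g)%R D = (4 * (1 - (3/4) ^ D))%R.
Proof. induction D; cbn [rsum]. simpl; ring. rewrite IHD. simpl. field. Qed.

Lemma partial_bound n f c : (2 <= n)%nat -> (forall i, 0 <= f i)%R -> f 0%nat = 0%R ->
  (forall g, rsum (fun t => f (n ^ g + t)%nat) (n ^ S g - n ^ g) <= c * (3/4) ^ g)%R ->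
  forall N, (rsum f N <= 4 * c)%R.
Proof.
  intros Hn Hf H0 Hg N. assert (N < n ^ N)%nat by (apply Nat.pow_gt_lin_r; lia).
  eapply Rle_trans. apply (rsum_mono f N (n ^ N)); auto; lia.
  rewrite rsum_gens by lia. rewrite H0, Rplus_0_l.
  eapply Rle_trans. apply (rsum_le _ (fun g => c * (3/4) ^ g)%R). intros; auto.
  rewrite rsum_scal, rsum_geom34.
  assert (0 <= c)%R. { specialize (Hg 0%nat). simpl in Hg. eapply Rle_trans; [|rewrite Rmult_1_r in Hg; apply Hg]. apply rsum_nonneg; auto. }
  assert (0 < (3/4) ^ N)%R by (apply pow_lt; lra). nra.
Qed.

Definition Aof n (M : nat -> R) (G : nat -> nat) l := (M l ^ 2 * INR n ^ (G l + 2) * (4/3) ^ (G l))%R.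

Lemma INR_gen_le n g : (1 <= n)%nat -> (INR (n ^ S g - n ^ g) <= INR n ^ (g + 1))%R.
Proof. intros Hn. rewrite <- pow_INR. apply le_INR. replace (g + 1)%nat with (S g) by lia. lia. Qed.

Lemma sq_le a b : (0 <= a)%R -> (a <= b)%R -> (a ^ 2 <= b ^ 2)%R.
Proof. intros. apply pow_incr; auto. Qed.

Lemma M_nonneg n x G M rad l : good n x G M rad -> (0 <= M l)%R.
Proof. intros Hg. eapply Rle_trans; [apply Cmod_ge_0 | apply (g_M _ _ _ _ _ Hg l 0%nat)]. Qed.

Lemma Lab_rad rad l j : Lab rad l j -> (rad l <= j)%nat.
Proof. intros H. pose proof (Lab_ge _ _ _ H). pose proof (Pp_rad rad l). lia. Qed.

Lemma Y_gen_energy n x G M rad : good n x G M rad ->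
  (forall l D, (rad l <= D)%nat -> (Aof n M G l <= (3/2) ^ D)%R) ->
  forall d, (rsum (fun t => Cmod (ybig n x G rad (n ^ d + t)%nat) ^ 2) (n ^ S d - n ^ d) <= 1 * (3/4) ^ d)%R.
Proof.
  intros Hg HA d. pose proof (g_n _ _ _ _ _ Hg) as Hn.
  assert (Hq : (2 <= INR n)%R) by (replace 2%R with (INR 2) by (simpl; ring); apply le_INR; auto).
  destruct (classic (exists j l, Own G rad d j l)) as [[j [l Ho]]|Hno].
  - eapply Rle_trans. apply (rsum_le _ (fun _ => (M l / INR n ^ (j - 1)) ^ 2)%R).
    { intros t Ht. apply sq_le. apply Cmod_ge_0. eapply ybig_bound; eauto. lia. }
    rewrite rsum_const. pose proof (M_nonneg _ _ _ _ _ l Hg).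
    assert (0 <= (M l / INR n ^ (j - 1)) ^ 2)%R by apply pow2_ge_0.
    eapply Rle_trans. apply Rmult_le_compat_r; auto. apply INR_gen_le. lia.
    destruct Ho as [HL [h1 h2]].
    pose proof (err_ineq (INR n) (M l) 4 d 0 j (G l) Hq H ltac:(lra) ltac:(lia) (Lab_pos _ _ _ HL)) as E.
    replace (j - 0)%nat with j in E by lia. simpl pow in E at 2. rewrite Rmult_1_l in E.
    replace (4/4)%R with 1%R in E by field. apply E.
    replace (4/4)%R with 1%R by field. rewrite Rmult_1_r. apply HA. apply Lab_rad; auto.
  - rewrite rsum_zero. assert (0 < (3/4)^d)%R by (apply pow_lt; lra). lra.
    intros t Ht. rewrite (ybig_zero n x G M rad d). rewrite Cmod_0. simpl; ring. auto. lia.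
    intros j l Ho; apply Hno; eauto.
Qed.

Lemma Y_H2 n x G M rad : good n x G M rad ->
  (forall l D, (rad l <= D)%nat -> (Aof n M G l <= (3/2) ^ D)%R) ->
  inH2 (ybig n x G rad).
Proof.
  intros Hg HA. pose proof (g_n _ _ _ _ _ Hg) as Hn.
  refine (proj1 (series_bounded _ 4 (fun k => pow2_ge_0 _) _)).
  intros N. replace 4%R with (4 * 1)%R by ring. apply (partial_bound n); auto.
  intros; apply pow2_ge_0. rewrite ybig_0, Cmod_0 by lia. simpl; ring.
  apply (Y_gen_energy n x G M rad Hg HA).
Qed.

Lemma err_gen_energy n x G M rad (dl : nat -> R) j l : good n x G M rad ->
  (forall l, (0 < dl l)%R) ->
  (forall l l' D, (rad l <= D)%nat -> (rad l' <= D)%nat -> (Aof n M G l' * (4 / dl l) <= (3/2) ^ D)%R) ->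
  Lab rad l j -> forall g,
  (rsum (fun t => Cmod (Cminus (BS n x G rad j (n ^ g + t)%nat) (x l (n ^ g + t)%nat)) ^ 2) (n ^ S g - n ^ g)
    <= dl l / 4 * (3/4) ^ g)%R.
Proof.
  intros Hg Hdl HAB HL g. pose proof (g_n _ _ _ _ _ Hg) as Hn.
  assert (Hq : (2 <= INR n)%R) by (replace 2%R with (INR 2) by (simpl; ring); apply le_INR; auto).
  assert (HR : (0 <= dl l / 4 * (3/4) ^ g)%R). { specialize (Hdl l). assert (0 < (3/4)^g)%R by (apply pow_lt; lra). nra. }
  assert (Hi : forall t, (t < n ^ S g - n ^ g)%nat -> (n ^ g <= n ^ g + t < n ^ S g)%nat) by (intros; lia).
  destruct (Compare_dec.le_lt_dec (G l) g) as [Hgl|Hgl].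
  - assert (Hx : forall t, (t < n ^ S g - n ^ g)%nat -> x l (n ^ g + t)%nat = RtoC 0).
    { intros t Ht. apply (g_supp _ _ _ _ _ Hg). assert (n ^ G l <= n ^ g)%nat by (apply Nat.pow_le_mono_r; lia). lia. }
    destruct (classic (exists j'' l'', Own G rad (g + j) j'' l'')) as [[j'' [l'' Ho]]|Hno].
    + assert (Hbd : forall t, (t < n ^ S g - n ^ g)%nat -> (Cmod (Cminus (BS n x G rad j (n ^ g + t)%nat) (x l (n ^ g + t)%nat)) ^ 2 <= (INR n ^ j * (M l'' / INR n ^ (j'' - 1))) ^ 2)%R).
      { intros t Ht. rewrite Hx by auto. replace (Cminus (BS n x G rad j (n ^ g + t)%nat) (RtoC 0)) with (BS n x G rad j (n ^ g + t)%nat) by ring.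
        apply sq_le. apply Cmod_ge_0. apply (proj2 (BS_far n x G M rad j l g _ j'' l'' Hg HL (Hi t Ht) Hgl Ho)). }
      destruct (BS_far n x G M rad j l g (n ^ g) j'' l'' Hg HL ltac:(pose proof (pow_pos_nat n g ltac:(lia)); simpl; nia) Hgl Ho) as [Hjj _].
      eapply Rle_trans. apply (rsum_le _ _ _ Hbd). rewrite rsum_const.
      pose proof (M_nonneg _ _ _ _ _ l'' Hg).
      assert (0 <= (INR n ^ j * (M l'' / INR n ^ (j'' - 1))) ^ 2)%R by apply pow2_ge_0.
      eapply Rle_trans. apply Rmult_le_compat_r; auto. apply INR_gen_le. lia.
      destruct Ho as [HL'' [h1 h2]].
      destruct (Lab_sep rad l l'' j j'' (g_mono _ _ _ _ _ Hg) HL HL'' Hjj) as [s1 s2].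
      apply (err_ineq (INR n) (M l'') (dl l) g j j'' (G l'') Hq H (Hdl l) ltac:(lia) Hjj).
      apply HAB; auto.
    + rewrite rsum_zero. auto. intros t Ht. rewrite Hx by auto. rewrite (BS_none n x G M rad j g). 
      replace (Cminus (RtoC 0) (RtoC 0)) with (RtoC 0) by ring. rewrite Cmod_0. simpl; ring. auto. apply Hi; auto.
      intros j'' l'' Ho; apply Hno; eauto.
  - rewrite rsum_zero. auto. intros t Ht. rewrite (BS_own n x G M rad j l g) by auto.
    replace (Cminus (x l (n ^ g + t)%nat) (x l (n ^ g + t)%nat)) with (RtoC 0) by ring. rewrite Cmod_0. simpl; ring.
Qed.

Lemma err_total n x G M rad (dl : nat -> R) j l : good n x G M rad ->
  (forall l, (0 < dl l)%R) ->
  (forall l l' D, (rad l <= D)%nat -> (rad l' <= D)%nat -> (Aof n M G l' * (4 / dl l) <= (3/2) ^ D)%R) ->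
  Lab rad l j -> forall N,
  (rsum (fun i => Cmod (Cminus (BS n x G rad j i) (x l i)) ^ 2) N <= dl l)%R.
Proof.
  intros Hg Hdl HAB HL N. pose proof (g_n _ _ _ _ _ Hg) as Hn.
  replace (dl l) with (4 * (dl l / 4))%R by field. apply (partial_bound n); auto.
  intros; apply pow2_ge_0. rewrite (BS_0 n x G M rad j l Hg HL).
  replace (Cminus (x l 0%nat) (x l 0%nat)) with (RtoC 0) by ring. rewrite Cmod_0. simpl; ring.
  apply (err_gen_energy n x G M rad dl j l); auto.
Qed.

Lemma iter_BS n x G M rad T j : good n x G M rad -> is_adjoint_W n T -> inH2 (ybig n x G rad) ->
  inH2 (Nat.iter j T (ybig n x G rad)) /\ forall i, Nat.iter j T (ybig n x G rad) i = BS n x G rad j i.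
Proof. intros Hg HT HY. pose proof (g_n _ _ _ _ _ Hg) as Hn.
  destruct (Titer n T ltac:(lia) HT _ HY j) as [H1 H2]. split; auto. Qed.

Lemma INR_Z_to_nat z : (0 <= z)%Z -> INR (Z.to_nat z) = IZR z.
Proof. intros H. rewrite INR_IZR_INZ, Z2Nat.id; auto. Qed.

Lemma nat_above r : exists N : nat, (r <= INR N)%R.
Proof. destruct (archimed r) as [h1 h2]. destruct (Z_le_gt_dec 0 (up r)) as [hz|hz].
  - exists (Z.to_nat (up r)). rewrite INR_Z_to_nat; auto. lra.
  - exists 0%nat. simpl. assert (IZR (up r) < 0)%R by (apply IZR_lt; lia). lra. Qed.

Lemma int_approx r : exists a b : nat, (Rabs (INR a - INR b - r) <= 1)%R.
Proof. destruct (archimed r) as [h1 h2]. set (z := up r) in *.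
  destruct (Z_le_gt_dec 0 z) as [hz|hz].
  - exists (Z.to_nat z), 0%nat. rewrite INR_Z_to_nat; auto. simpl. rewrite Rabs_pos_eq; lra.
  - exists 0%nat, (Z.to_nat (- z)). rewrite INR_Z_to_nat by lia. rewrite opp_IZR. simpl. rewrite Rabs_pos_eq; lra. Qed.

Lemma bernoulli32 r : (1 + INR r / 2 <= (3/2) ^ r)%R.
Proof. induction r. simpl; lra. rewrite S_INR. simpl pow.
  assert (0 <= INR r)%R by apply pos_INR. nra. Qed.

Lemma pow32_above Y : exists r : nat, (Y <= (3/2) ^ r)%R.
Proof. destruct (nat_above (2 * Y)) as [N HN]. exists N. pose proof (bernoulli32 N). pose proof (pos_INR N). lra. Qed.

Lemma rsum_le_Series (a : nat -> R) : (forall k, 0 <= a k)%R -> ex_series a -> forall N, (rsum a N <= Series a)%R.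
Proof.
  intros Hp Hex N. assert (Hl : is_lim_seq (sum_n a) (Series a)) by (apply (Series_correct a Hex)).
  assert (H := is_lim_seq_le_loc (fun _ => rsum a N) (sum_n a) (rsum a N) (Series a)).
  apply H; auto. exists N. intros m Hm. rewrite sum_n_rsum. apply rsum_mono; auto. apply is_lim_seq_const.
Qed.

Lemma tail_small (a : nat -> R) eps : (forall k, 0 <= a k)%R -> ex_series a -> (0 < eps)%R ->
  exists K, forall N, (rsum (fun i => if Nat.leb K i then a i else 0) N <= eps)%R.
Proof.
  intros Hp Hex He. assert (Hl : is_lim_seq (sum_n a) (Series a)) by (apply (Series_correct a Hex)).
  apply is_lim_seq_spec in Hl. destruct (Hl (mkposreal eps He)) as [K0 HK0]. simpl in HK0.
  exists (S K0). intros N. specialize (HK0 K0 (Nat.le_refl _)). rewrite sum_n_rsum in HK0.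
  destruct (Compare_dec.le_lt_dec N (S K0)).
  - rewrite rsum_zero. lra. intros i Hi. destruct (Nat.leb_spec (S K0) i); auto. lia.
  - replace N with (S K0 + (N - S K0))%nat by lia. rewrite rsum_add. rewrite rsum_zero.
    rewrite (rsum_ext _ (fun t => a (S K0 + t)%nat)).
    pose proof (rsum_le_Series a Hp Hex (S K0 + (N - S K0))). rewrite rsum_add in H.
    apply Rabs_def2 in HK0. lra.
    intros t _. destruct (Nat.leb_spec (S K0) (S K0 + t)); auto. lia.
    intros i Hi. destruct (Nat.leb_spec (S K0) i); auto. lia.
Qed.

Fixpoint coord (s i : nat) : nat :=
  match i with O => fst (Cantor.of_nat s) | S i' => coord (snd (Cantor.of_nat s)) i' end.

Lemma coord_exists (v : nat -> nat) K : exists s, forall i, (i < K)%nat -> coord s i = v i.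
Proof. revert v. induction K; intros v.
  - exists 0%nat. intros; lia.
  - destruct (IHK (fun i => v (S i))) as [s' Hs']. exists (Cantor.to_nat (v 0%nat, s')).
    intros [|i] Hi; cbn [coord]; rewrite Cantor.cancel_of_to; simpl; auto. apply Hs'. lia. Qed.

Definition qv (D v : nat) : C :=
  ((INR (fst (Cantor.of_nat v)) - INR (fst (Cantor.of_nat (snd (Cantor.of_nat v))))) / (INR D + 1),
   (INR (fst (Cantor.of_nat (snd (Cantor.of_nat (snd (Cantor.of_nat v)))))) - INR (snd (Cantor.of_nat (snd (Cantor.of_nat (snd (Cantor.of_nat v))))))) / (INR D + 1))%R.

Lemma Cmod_sq (w : C) : (Cmod w ^ 2 = fst w ^ 2 + snd w ^ 2)%R.
Proof. unfold Cmod. rewrite pow2_sqrt. auto. destruct w; simpl. nra. Qed.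

Lemma qv_exists D z : exists v, (Cmod (Cminus (qv D v) z) ^ 2 <= 2 / (INR D + 1) ^ 2)%R.
Proof.
  assert (HD : (0 < INR D + 1)%R) by (pose proof (pos_INR D); lra).
  destruct (int_approx (fst z * (INR D + 1))) as [a [b Hab]].
  destruct (int_approx (snd z * (INR D + 1))) as [c [e Hce]].
  exists (Cantor.to_nat (a, Cantor.to_nat (b, Cantor.to_nat (c, e)))).
  unfold qv. repeat (rewrite Cantor.cancel_of_to; cbn [fst snd]).
  rewrite Cmod_sq. destruct z as [zr zi]. simpl in *.
  assert (E1 : ((INR a - INR b) / (INR D + 1) - zr = (INR a - INR b - zr * (INR D + 1)) / (INR D + 1))%R) by (field; lra).
  assert (E2 : ((INR c - INR e) / (INR D + 1) - zi = (INR c - INR e - zi * (INR D + 1)) / (INR D + 1))%R) by (field; lra).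
  unfold Rminus at 1 3 in E1. unfold Rminus at 1 3 in E2.
  rewrite E1, E2.
  set (u := (INR a - INR b - zr * (INR D + 1))%R) in *. set (w := (INR c - INR e - zi * (INR D + 1))%R) in *.
  replace (INR a - INR b + - (zr * (INR D + 1)))%R with u by (unfold u; ring).
  replace (INR c - INR e + - (zi * (INR D + 1)))%R with w by (unfold w; ring).
  assert (-1 <= u <= 1)%R by (apply Rabs_le_between; auto).
  assert (-1 <= w <= 1)%R by (apply Rabs_le_between; auto).
  replace (u / (INR D + 1) * (u / (INR D + 1) * 1) + w / (INR D + 1) * (w / (INR D + 1) * 1))%R
    with ((u * u + w * w) * / ((INR D + 1) * ((INR D + 1) * 1)))%R by (field; lra).
  unfold Rdiv. apply Rmult_le_compat_r. left; apply Rinv_0_lt_compat; nra. nra.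
Qed.

Definition cG0 c := fst (Cantor.of_nat c).
Definition ch c := fst (Cantor.of_nat (snd (Cantor.of_nat c))).
Definition cD c := fst (Cantor.of_nat (snd (Cantor.of_nat (snd (Cantor.of_nat c))))).
Definition cs c := snd (Cantor.of_nat (snd (Cantor.of_nat (snd (Cantor.of_nat c))))).

Definition base n c i : C := if Nat.ltb i (n ^ cG0 c) then qv (cD c) (coord (cs c) i) else RtoC 0.
Definition Ssum n c := csum (base n c) (n ^ cG0 c).
Definition cE c := (cG0 c + ch c)%nat.
Definition corrv n c : C := Cmult (RtoC (/ INR ((n - 1) * n ^ cE c))) (Ssum n c).
Definition corr n c i : C := if (Nat.leb (n ^ cE c) i && Nat.ltb i (n ^ S (cE c)))%bool then corrv n c else RtoC 0.
Definition tgt n c i := Cminus (base n c i) (corr n c i).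
Definition Gt c := S (cE c).
Definition Mt n c := (rsum (fun i => Cmod (base n c i)) (n ^ cG0 c) + Cmod (Ssum n c))%R.

Lemma csum_minus f g N : csum (fun i => Cminus (f i) (g i)) N = Cminus (csum f N) (csum g N).
Proof. induction N; simpl. apply injective_projections; simpl; ring. rewrite IHN; ring. Qed.

Lemma pow_le_E n a b : (1 <= n)%nat -> (a <= b)%nat -> (n ^ a <= n ^ b)%nat.
Proof. intros; apply Nat.pow_le_mono_r; lia. Qed.

Lemma tgt_sum0 n c : (2 <= n)%nat -> csum (tgt n c) (n ^ Gt c) = RtoC 0.
Proof.
  intros Hn. unfold tgt. rewrite csum_minus.
  assert (HG : (n ^ cG0 c <= n ^ cE c)%nat) by (apply pow_le_E; unfold cE; lia).
  assert (HE : (n ^ cE c <= n ^ Gt c)%nat) by (apply pow_le_E; unfold Gt; lia).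
  assert (E1 : csum (base n c) (n ^ Gt c) = Ssum n c).
  { replace (n ^ Gt c)%nat with (n ^ cG0 c + (n ^ Gt c - n ^ cG0 c))%nat by lia. rewrite csum_add.
    rewrite (csum_zero (fun t => base n c (n ^ cG0 c + t)%nat)). unfold Ssum. ring.
    intros i Hi. unfold base. destruct (Nat.ltb_spec (n ^ cG0 c + i) (n ^ cG0 c)); auto. lia. }
  assert (E2 : csum (corr n c) (n ^ Gt c) = Ssum n c).
  { replace (n ^ Gt c)%nat with (n ^ cE c + (n ^ S (cE c) - n ^ cE c))%nat by (unfold Gt in *; lia). rewrite csum_add.
    rewrite (csum_zero (corr n c)). rewrite (csum_ext _ (fun _ => corrv n c)). rewrite csum_const.
    rewrite pow_S_sub by lia. unfold corrv. rewrite RtoC_mul_inv. ring.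
    apply not_0_INR. pose proof (pow_pos_nat n (cE c) ltac:(lia)). nia.
    intros i Hi. unfold corr. destruct (Nat.leb_spec (n ^ cE c) (n ^ cE c + i)); [|lia].
    destruct (Nat.ltb_spec (n ^ cE c + i) (n ^ S (cE c))); [|lia]. auto.
    intros i Hi. unfold corr. destruct (Nat.leb_spec (n ^ cE c) i); [lia|]. auto. }
  rewrite E1, E2. ring.
Qed.

Lemma tgt_supp n c i : (2 <= n)%nat -> (n ^ Gt c <= i)%nat -> tgt n c i = RtoC 0.
Proof.
  intros Hn Hi. assert (HG : (n ^ cG0 c <= n ^ Gt c)%nat) by (apply pow_le_E; unfold Gt, cE; lia).
  unfold tgt, base, corr. destruct (Nat.ltb_spec i (n ^ cG0 c)); [lia|].
  destruct (Nat.ltb_spec i (n ^ S (cE c))). unfold Gt in Hi; lia. rewrite Bool.andb_false_r. ring.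
Qed.

Lemma tgt_M n c i : (2 <= n)%nat -> (Cmod (tgt n c i) <= Mt n c)%R.
Proof.
  intros Hn. unfold tgt, Mt. eapply Rle_trans. 
  replace (Cminus (base n c i) (corr n c i)) with (Cplus (base n c i) (Copp (corr n c i))) by ring. apply Cmod_triangle.
  rewrite Cmod_opp. apply Rplus_le_compat.
  - unfold base at 1. destruct (Nat.ltb_spec i (n ^ cG0 c)).
    + replace (n ^ cG0 c)%nat with (i + 1 + (n ^ cG0 c - (i + 1)))%nat by lia. rewrite rsum_add.
      rewrite Nat.add_1_r. simpl rsum at 1.
      assert (0 <= rsum (fun i0 => Cmod (base n c i0)) i)%R by (apply rsum_nonneg; intros; apply Cmod_ge_0).
      assert (0 <= rsum (fun t => Cmod (base n c (S i + t)%nat)) (n ^ cG0 c - S i))%R by (apply rsum_nonneg; intros; apply Cmod_ge_0).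
      unfold base at 2. destruct (Nat.ltb_spec i (n ^ cG0 c)); [|lia]. lra.
    + rewrite Cmod_0. apply rsum_nonneg; intros; apply Cmod_ge_0.
  - unfold corr. destruct (_ && _)%bool.
    + unfold corrv. rewrite Cmod_mult, Cmod_R. rewrite Rabs_pos_eq.
      assert (1 <= INR ((n - 1) * n ^ cE c))%R. { replace 1%R with (INR 1) by auto. apply le_INR. pose proof (pow_pos_nat n (cE c) ltac:(lia)). nia. }
      assert (0 < / INR ((n - 1) * n ^ cE c) <= 1)%R. { split. apply Rinv_0_lt_compat; lra. rewrite <- Rinv_1. apply Rinv_le_contravar; lra. }
      pose proof (Cmod_ge_0 (Ssum n c)). nra.
      left; apply Rinv_0_lt_compat. apply lt_0_INR. pose proof (pow_pos_nat n (cE c) ltac:(lia)). nia.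
    + rewrite Cmod_0. apply Cmod_ge_0.
Qed.

Lemma rsum_window f a b v N : (a <= b)%nat -> (0 <= v)%R -> (forall i, 0 <= f i)%R ->
  (forall i, (i < a)%nat \/ (b <= i)%nat -> f i = 0%R) -> (forall i, f i <= v)%R ->
  (rsum f N <= INR (b - a) * v)%R.
Proof.
  intros Hab Hv Hp Hout Hin. eapply Rle_trans. apply (rsum_mono f N (b + N)); auto; lia.
  rewrite rsum_add. rewrite (rsum_zero (fun t => f (b + t)%nat)) by (intros; apply Hout; lia).
  replace b with (a + (b - a))%nat at 1 by lia. rewrite rsum_add. rewrite (rsum_zero f a) by (intros; apply Hout; lia).
  rewrite <- rsum_const. replace (a + (b - a))%nat with b by lia.
  assert (rsum (fun t => f (a + t)%nat) (b - a) <= rsum (fun _ => v) (b - a))%R by (apply rsum_le; auto). lra.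
Qed.

Lemma sq_tri (u w : C) : (Cmod (Cminus (Copp u) w) ^ 2 <= 2 * Cmod u ^ 2 + 2 * Cmod w ^ 2)%R.
Proof. assert (Cmod (Cminus (Copp u) w) <= Cmod u + Cmod w)%R.
  { replace (Cminus (Copp u) w) with (Cplus (Copp u) (Copp w)) by ring. eapply Rle_trans. apply Cmod_triangle. rewrite !Cmod_opp. lra. }
  pose proof (Cmod_ge_0 (Cminus (Copp u) w)). pose proof (Cmod_ge_0 u). pose proof (Cmod_ge_0 w).
  assert (Cmod (Cminus (Copp u) w) ^ 2 <= (Cmod u + Cmod w) ^ 2)%R by (apply pow_incr; lra).
  assert (0 <= (Cmod u - Cmod w) ^ 2)%R by apply pow2_ge_0. nra. Qed.

Lemma approx n x0 eps : (2 <= n)%nat -> inH2 x0 -> (0 < eps)%R ->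
  exists c, forall N, (rsum (fun i => Cmod (Cminus (tgt n c i) (x0 i)) ^ 2) N <= eps)%R.
Proof.
  intros Hn Hx He.
  set (a := fun i => (Cmod (x0 i) ^ 2)%R).
  destruct (tail_small a (eps / 8) (fun k => pow2_ge_0 _) Hx ltac:(lra)) as [K HK].
  set (nK := (n ^ K)%nat). assert (HnK : (K <= nK)%nat) by (unfold nK; pose proof (Nat.pow_gt_lin_r n K ltac:(lia)); lia).
  destruct (nat_above (16 * INR nK / eps)) as [D HD].
  assert (Hv : forall i, {v | (Cmod (Cminus (qv D v) (x0 i)) ^ 2 <= 2 / (INR D + 1) ^ 2)%R}).
  { intros i. apply constructive_indefinite_description. apply qv_exists. }
  set (vf := fun i => proj1_sig (Hv i)).
  destruct (coord_exists vf nK) as [s Hs].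
  set (S0 := csum (fun i => qv D (coord s i)) nK).
  destruct (nat_above (16 * Cmod S0 ^ 2 / eps)) as [h Hh].
  set (c := Cantor.to_nat (K, Cantor.to_nat (h, Cantor.to_nat (D, s)))).
  assert (E0 : cG0 c = K) by (unfold cG0, c; rewrite Cantor.cancel_of_to; auto).
  assert (Eh : ch c = h) by (unfold ch, c; repeat (rewrite Cantor.cancel_of_to; cbn [fst snd]); auto).
  assert (ED : cD c = D) by (unfold cD, c; repeat (rewrite Cantor.cancel_of_to; cbn [fst snd]); auto).
  assert (Es : cs c = s) by (unfold cs, c; repeat (rewrite Cantor.cancel_of_to; cbn [fst snd]); auto).
  assert (HS : Ssum n c = S0).
  { unfold Ssum, S0. rewrite E0. fold nK. apply csum_ext. intros i Hi. unfold base. rewrite E0, ED, Es. fold nK.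
    destruct (Nat.ltb_spec i nK); auto; lia. }
  exists c. intros N.
  assert (HEc : cE c = (K + h)%nat) by (unfold cE; rewrite E0, Eh; auto).
  set (E := cE c) in *. set (cv := corrv n c).
  set (b1 := fun i => if Nat.ltb i nK then (2 / (INR D + 1) ^ 2)%R else 0%R).
  set (b2 := fun i => (2 * (if Nat.leb K i then a i else 0))%R).
  set (b3 := fun i => if (Nat.leb (n ^ E) i && Nat.ltb i (n ^ S E))%bool then (2 * Cmod cv ^ 2)%R else 0%R).
  assert (HnE : (nK <= n ^ E)%nat) by (unfold nK; apply pow_le_E; lia).
  assert (Hb1 : forall i, (0 <= b1 i)%R). { intros i; unfold b1. destruct (Nat.ltb i nK). apply Rmult_le_pos. lra. left; apply Rinv_0_lt_compat, pow_lt; pose proof (pos_INR D); lra. lra. }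
  assert (Hb2 : forall i, (0 <= b2 i)%R). { intros i; unfold b2. destruct (Nat.leb K i). apply Rmult_le_pos. lra. apply pow2_ge_0. lra. }
  assert (Hb3 : forall i, (0 <= b3 i)%R). { intros i; unfold b3. destruct (_ && _)%bool. apply Rmult_le_pos. lra. apply pow2_ge_0. lra. }
  assert (Hpt : forall i, (Cmod (Cminus (tgt n c i) (x0 i)) ^ 2 <= b1 i + b2 i + b3 i)%R).
  { intros i. unfold tgt. destruct (Nat.ltb_spec i nK) as [hi|hi].
    - assert (Hb : base n c i = qv D (vf i)). { unfold base. rewrite E0, ED, Es. fold nK. destruct (Nat.ltb_spec i nK); [|lia]. rewrite Hs; auto. }
      assert (Hc : corr n c i = RtoC 0). { unfold corr. fold E. destruct (Nat.leb_spec (n ^ E) i); [lia|]. auto. }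
      rewrite Hb, Hc. replace (Cminus (Cminus (qv D (vf i)) (RtoC 0)) (x0 i)) with (Cminus (qv D (vf i)) (x0 i)) by ring.
      pose proof (proj2_sig (Hv i)) as Hq. fold (vf i) in Hq.
      unfold b1. destruct (Nat.ltb_spec i nK); [|lia]. specialize (Hb2 i). specialize (Hb3 i). lra.
    - assert (Hb : base n c i = RtoC 0). { unfold base. rewrite E0. fold nK. destruct (Nat.ltb_spec i nK); [lia|]. auto. }
      rewrite Hb. replace (Cminus (Cminus (RtoC 0) (corr n c i)) (x0 i)) with (Cminus (Copp (corr n c i)) (x0 i)) by ring.
      eapply Rle_trans. apply sq_tri.
      assert (2 * Cmod (corr n c i) ^ 2 <= b3 i)%R.
      { unfold b3, corr. fold E. fold cv. destruct (_ && _)%bool. lra. rewrite Cmod_0. simpl. lra. }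
      assert (b2 i = 2 * a i)%R. { unfold b2. destruct (Nat.leb_spec K i); [auto|lia]. }
      unfold b1. destruct (Nat.ltb_spec i nK); [lia|]. unfold a in H0. lra. }
  eapply Rle_trans. apply (rsum_le _ (fun i => b1 i + b2 i + b3 i)%R). intros; auto.
  rewrite !rsum_plus.
  assert (R1 : (rsum b1 N <= INR (nK - 0) * (2 / (INR D + 1) ^ 2))%R).
  { apply rsum_window; auto. lia. apply Rmult_le_pos. lra. left; apply Rinv_0_lt_compat, pow_lt; pose proof (pos_INR D); lra.
    intros i [hi|hi]. lia. unfold b1. destruct (Nat.ltb_spec i nK); [lia|auto].
    intros i. unfold b1. destruct (Nat.ltb i nK). lra. apply Rmult_le_pos. lra. left; apply Rinv_0_lt_compat, pow_lt; pose proof (pos_INR D); lra. }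
  assert (R2 : (rsum b2 N <= 2 * (eps / 8))%R).
  { unfold b2. rewrite rsum_scal. specialize (HK N). lra. }
  assert (R3 : (rsum b3 N <= INR (n ^ S E - n ^ E) * (2 * Cmod cv ^ 2))%R).
  { apply rsum_window; auto. simpl; nia. apply Rmult_le_pos. lra. apply pow2_ge_0.
    intros i hi. unfold b3. destruct (Nat.leb_spec (n ^ E) i); destruct (Nat.ltb_spec i (n ^ S E)); simpl; auto; lia.
    intros i. unfold b3. destruct (_ && _)%bool. lra. apply Rmult_le_pos. lra. apply pow2_ge_0. }
  assert (HD1 : (0 < INR D + 1)%R) by (pose proof (pos_INR D); lra).
  assert (N1 : (INR (nK - 0) * (2 / (INR D + 1) ^ 2) <= eps / 8)%R).
  { replace (nK - 0)%nat with nK by lia.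
    assert (HnK0 : (0 <= INR nK)%R) by apply pos_INR.
    assert (16 * INR nK <= eps * (INR D + 1))%R. { apply Rmult_le_reg_r with (/ eps)%R. apply Rinv_0_lt_compat; lra.
      replace (eps * (INR D + 1) * / eps)%R with (INR D + 1)%R by (field; lra). unfold Rdiv in HD. lra. }
    assert (1 <= INR D + 1)%R by (pose proof (pos_INR D); lra).
    apply Rmult_le_reg_r with ((INR D + 1) ^ 2 * 8)%R. nra.
    replace (INR nK * (2 / (INR D + 1) ^ 2) * ((INR D + 1) ^ 2 * 8))%R with (16 * INR nK)%R by (field; lra).
    replace (eps / 8 * ((INR D + 1) ^ 2 * 8))%R with (eps * (INR D + 1) * (INR D + 1))%R by (field).
    nra. }
  assert (N3 : (INR (n ^ S E - n ^ E) * (2 * Cmod cv ^ 2) <= eps / 8)%R).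
  { assert (HX : INR (n ^ S E - n ^ E) = INR ((n - 1) * n ^ E)) by (rewrite pow_S_sub by lia; auto).
    assert (Hpos : (1 <= INR ((n - 1) * n ^ E))%R). { replace 1%R with (INR 1) by auto. apply le_INR. pose proof (pow_pos_nat n E ltac:(lia)). nia. }
    assert (Hcv : Cmod cv = (Cmod S0 / INR ((n - 1) * n ^ E))%R).
    { unfold cv, corrv. fold E. rewrite HS. rewrite Cmod_mult, Cmod_R, Rabs_pos_eq. unfold Rdiv. ring. left; apply Rinv_0_lt_compat; lra. }
    assert (Hbig : (16 * Cmod S0 ^ 2 / eps <= INR ((n - 1) * n ^ E))%R).
    { eapply Rle_trans. apply Hh. apply le_INR. assert (h < n ^ h)%nat by (apply Nat.pow_gt_lin_r; lia).
      assert (n ^ h <= n ^ E)%nat by (apply pow_le_E; lia). pose proof (pow_pos_nat n E ltac:(lia)). nia. }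
    rewrite HX, Hcv. set (X := INR ((n - 1) * n ^ E)) in *.
    assert (16 * Cmod S0 ^ 2 <= eps * X)%R. { apply Rmult_le_reg_r with (/ eps)%R. apply Rinv_0_lt_compat; lra.
      replace (eps * X * / eps)%R with X by (field; lra). unfold Rdiv in Hbig. lra. }
    replace (X * (2 * (Cmod S0 / X) ^ 2))%R with (2 * Cmod S0 ^ 2 / X)%R by (field; lra).
    apply Rmult_le_reg_r with (X * 8)%R. lra. replace (2 * Cmod S0 ^ 2 / X * (X * 8))%R with (16 * Cmod S0 ^ 2)%R by (field; lra).
    replace (eps / 8 * (X * 8))%R with (eps * X)%R by field. lra. }
  lra.
Qed.

Definition xF n l := tgt n (snd (Cantor.of_nat l)).
Definition GF l := Gt (snd (Cantor.of_nat l)).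
Definition MF n l := Mt n (snd (Cantor.of_nat l)).
Definition dlF l := (/ (INR (fst (Cantor.of_nat l)) + 1))%R.
Definition XF n l := (Aof n (MF n) GF l + 4 / dlF l + 1)%R.
Definition rr n l := proj1_sig (constructive_indefinite_description _ (pow32_above (XF n l ^ 2))).
Fixpoint radF n l := match l with
  | O => (rr n 0 + GF 0 + 1)%nat
  | S l' => (radF n l' + rr n (S l') + GF (S l') + 1)%nat end.

Lemma dlF_pos l : (0 < dlF l)%R.
Proof. unfold dlF. apply Rinv_0_lt_compat. pose proof (pos_INR (fst (Cantor.of_nat l))). lra. Qed.

Lemma radF_mono n a b : (a <= b)%nat -> (radF n a <= radF n b)%nat.
Proof. induction 1. lia. simpl. lia. Qed.

Lemma radF_ge n l : (rr n l + GF l + 1 <= radF n l)%nat.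
Proof. destruct l; simpl; lia. Qed.

Lemma goodF n : (2 <= n)%nat -> good n (xF n) GF (MF n) (radF n).
Proof. intros Hn. constructor.
  - auto.
  - apply radF_mono.
  - intros l. pose proof (radF_ge n l). lia.
  - intros l. apply tgt_sum0; auto.
  - intros l i Hi. apply tgt_supp; auto.
  - intros l i. apply tgt_M; auto.
Qed.

Lemma Aof_nonneg n l : (0 <= Aof n (MF n) GF l)%R.
Proof. unfold Aof. apply Rmult_le_pos. apply Rmult_le_pos. apply pow2_ge_0. apply pow_le, pos_INR. apply pow_le; lra. Qed.

Lemma XF_facts n l : (1 <= XF n l /\ Aof n (MF n) GF l <= XF n l /\ 4 / dlF l <= XF n l)%R.
Proof. unfold XF. pose proof (Aof_nonneg n l). assert (0 < 4 / dlF l)%R by (unfold Rdiv; apply Rmult_lt_0_compat; [lra| apply Rinv_0_lt_compat, dlF_pos]). lra. Qed.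

Lemma XF_rad n l D : (radF n l <= D)%nat -> (XF n l ^ 2 <= (3/2) ^ D)%R.
Proof. intros H. unfold rr. pose proof (radF_ge n l). unfold rr in H0.
  destruct (constructive_indefinite_description _ (pow32_above (XF n l ^ 2))) as [r Hr]. simpl in H0.
  eapply Rle_trans. apply Hr. apply Rle_pow. lra. lia. Qed.

Lemma HA_F n : forall l D, (radF n l <= D)%nat -> (Aof n (MF n) GF l <= (3/2) ^ D)%R.
Proof. intros l D H. destruct (XF_facts n l) as [h1 [h2 h3]]. pose proof (XF_rad n l D H). nra. Qed.

Lemma HAB_F n : forall l l' D, (radF n l <= D)%nat -> (radF n l' <= D)%nat -> (Aof n (MF n) GF l' * (4 / dlF l) <= (3/2) ^ D)%R.
Proof. intros l l' D H H'. destruct (XF_facts n l) as [h1 [h2 h3]]. destruct (XF_facts n l') as [h1' [h2' h3']].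
  pose proof (XF_rad n l D H). pose proof (XF_rad n l' D H'). pose proof (Aof_nonneg n l').
  assert (Aof n (MF n) GF l' * (4 / dlF l) <= XF n l' * XF n l)%R.
  { apply Rmult_le_compat; auto. left. unfold Rdiv; apply Rmult_lt_0_compat; [lra| apply Rinv_0_lt_compat, dlF_pos]. }
  destruct (Rle_dec (XF n l) (XF n l')); nra. Qed.

Lemma sq_tri2 (a b c : C) : (Cmod (Cminus a b) ^ 2 <= 2 * Cmod (Cminus a c) ^ 2 + 2 * Cmod (Cminus c b) ^ 2)%R.
Proof. assert (Cmod (Cminus a b) <= Cmod (Cminus a c) + Cmod (Cminus c b))%R.
  { replace (Cminus a b) with (Cplus (Cminus a c) (Cminus c b)) by ring. apply Cmod_triangle. }
  pose proof (Cmod_ge_0 (Cminus a b)). pose proof (Cmod_ge_0 (Cminus a c)). pose proof (Cmod_ge_0 (Cminus c b)).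
  assert (Cmod (Cminus a b) ^ 2 <= (Cmod (Cminus a c) + Cmod (Cminus c b)) ^ 2)%R by (apply pow_incr; lra).
  assert (0 <= (Cmod (Cminus a c) - Cmod (Cminus c b)) ^ 2)%R by apply pow2_ge_0. nra. Qed.

Lemma density_mono (A B : nat -> Prop) : (forall k, A k -> B k) -> Rbar_lt 0 (lower_density A) -> Rbar_lt 0 (lower_density B).
Proof. intros H HA. eapply Rbar_lt_le_trans. apply HA. unfold lower_density. apply LimInf_le.
  exists 1%nat. intros N HN. unfold Rdiv. apply Rmult_le_compat_r. left; apply Rinv_0_lt_compat, lt_0_INR; lia.
  apply le_INR. apply count_mono. intros; auto. Qed.

Theorem mainTheorem3 (n : nat) (T : (nat -> C) -> (nat -> C)) :
  (2 <= n)%nat -> is_adjoint_W n T -> frequently_hypercyclic T.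
Proof.
  intros Hn HT.
  pose proof (goodF n Hn) as Hg.
  set (Y := ybig n (xF n) GF (radF n)).
  assert (HY : inH2 Y) by (apply (Y_H2 n (xF n) GF (MF n) (radF n) Hg (HA_F n))).
  exists Y. split; auto.
  intros V HV [x0 Hx0]. destruct (HV x0 Hx0) as [Hx0H [eps [He Hball]]].
  assert (He2 : (0 < eps ^ 2 / 8)%R) by (assert (0 < eps ^ 2)%R by (apply pow_lt; lra); lra).
  destruct (approx n x0 (eps ^ 2 / 8) Hn Hx0H He2) as [c Hc].
  destruct (nat_above (8 / eps ^ 2)) as [k Hk].
  set (l := Cantor.to_nat (k, c)).
  assert (Exl : xF n l = tgt n c) by (unfold xF, l; rewrite Cantor.cancel_of_to; auto).
  assert (Edl : dlF l = (/ (INR k + 1))%R) by (unfold dlF, l; rewrite Cantor.cancel_of_to; auto).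
  assert (Hdl : (dlF l <= eps ^ 2 / 8)%R).
  { rewrite Edl. assert (0 < eps ^ 2)%R by (apply pow_lt; lra).
    assert (8 <= eps ^ 2 * (INR k + 1))%R. { apply Rmult_le_reg_r with (/ eps ^ 2)%R. apply Rinv_0_lt_compat; lra.
      replace (eps ^ 2 * (INR k + 1) * / eps ^ 2)%R with (INR k + 1)%R by (field; lra). unfold Rdiv in Hk. lra. }
    pose proof (pos_INR k). apply Rmult_le_reg_r with ((INR k + 1) * 8)%R. nra.
    replace (/ (INR k + 1) * ((INR k + 1) * 8))%R with 8%R by (field; lra).
    replace (eps ^ 2 / 8 * ((INR k + 1) * 8))%R with (eps ^ 2 * (INR k + 1))%R by field. lra. }
  apply (density_mono (Lab (radF n) l)); [| apply Lab_density].
  intros j HL.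
  destruct (iter_BS n (xF n) GF (MF n) (radF n) T j Hg HT HY) as [Hit1 Hit2]. fold Y in Hit1, Hit2.
  apply Hball. auto.
  assert (Hb : forall N, (rsum (fun i => Cmod (Cminus (Nat.iter j T Y i) (x0 i)) ^ 2) N <= eps ^ 2 / 2)%R).
  { intros N. pose proof (err_total n (xF n) GF (MF n) (radF n) dlF j l Hg dlF_pos (HAB_F n) HL N) as E1.
    pose proof (Hc N) as E2. rewrite Exl in E1.
    eapply Rle_trans. apply (rsum_le _ (fun i => 2 * Cmod (Cminus (BS n (xF n) GF (radF n) j i) (tgt n c i)) ^ 2 + 2 * Cmod (Cminus (tgt n c i) (x0 i)) ^ 2)%R).
    intros i _. rewrite Hit2. apply sq_tri2.
    rewrite rsum_plus, !rsum_scal. lra. }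
  destruct (series_bounded _ _ (fun k => pow2_ge_0 _) Hb) as [_ HS].
  unfold H2norm. set (S := Series _) in *.
  assert (Heps : eps = sqrt (eps ^ 2)) by (rewrite sqrt_pow2; lra).
  destruct (Rle_lt_dec 0 S).
  - rewrite Heps. apply sqrt_lt_1_alt. split; auto. assert (0 < eps ^ 2)%R by (apply pow_lt; lra). lra.
  - rewrite sqrt_neg_0 by lra. auto.
Qed.
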